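(* Consider a market with $M$ consumers $\mathcal{M}=\{1,\dots,M\}$ and $N$ suppliers $\mathcal{N}=\{1,\dots,N\}$, constants $d_0>0$, $\kappa_0>0$ with $Md_0<N\kappa_0$. Assume: for each $i\in\mathcal{M}$, $U_i$ is concave, strictly increasing and continuously differentiable on $[d_0,\infty)$ with $U_i(d_0)=0$; for each $i\in\mathcal{N}$, $C_i:\mathbb{R}\to\mathbb{R}$ is convex, strictly increasing and continuously differentiable with $C_i(s)\ge0$ for $s\ge0$ and $C_i(s)=0$ for $s\le0$. Assume further that no supplier is pivotal: $\frac{(N-1)\kappa_0}{Md_0}>1$. Define the game $\mathcal{G}$ whose players are $\mathcal{M}\cup\mathcal{N}$; consumer $i$ chooses $\theta_d^i\ge0$ and supplier $i$ chooses $\theta_s^i\ge 0$. For a profile with $\sum_i\theta_d^i+\sum_i\theta_s^i>0$, the price is $p(\boldsymbol{\theta}_d,\boldsymbol{\theta}_s)=\frac{\sum_i\theta_d^i+\sum_i\theta_s^i}{N\kappa_0-Md_0}$ and the payoffs are $$\pi_d^i=U_i\!\left(d_0+\frac{\theta_d^i}{p}\right)-p\,d_0-\theta_d^i\ (i\in\mathcal{M}),\qquad \pi_s^i=p\,\kappa_0-\theta_s^i-C_i\!\left(\kappa_0-\frac{\theta_s^i}{p}\right)\ (i\in\mathcal{N}),$$ with $p=p(\boldsymbol{\theta}_d,\boldsymbol{\theta}_s)$; if all parameters are zero, by convention each consumer is allocated $d_0$, each supplier $\kappa_0$, and the price is $0$. Then $\mathcal{G}$ has a unique Nash equilibrium $(\tilde{\boldsymbol{\theta}}_d,\tilde{\boldsymbol{\theta}}_s)$.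 Moreover, writing $\tilde p=p(\tilde{\boldsymbol{\theta}}_d,\tilde{\boldsymbol{\theta}}_s)$, the allocation $\tilde d_i=d_0+\tilde\theta_d^i/\tilde p$ ($i\in\mathcal{M}$), $\tilde s_i=\kappa_0-\tilde\theta_s^i/\tilde p$ ($i\in\mathcal{N}$) is the unique solution of the convex program $$\max_{\mathbf{d},\mathbf{s}}\ \sum_{i=1}^M\tilde U_i(d_i)-\sum_{i=1}^N\tilde C_i(s_i)\quad\text{s.t.}\quad \sum_{i=1}^M d_i=\sum_{i=1}^N s_i,\ \ 0\le s_i\le\kappa_0\ (i\in\mathcal{N}),\ \ d_i\ge d_0\ (i\in\mathcal{M}),$$ where $$\tilde U_i(d_i)=\left(1-\frac{d_i}{N\kappa_0-(M-1)d_0}\right)U_i(d_i)+\frac{1}{N\kappa_0-(M-1)d_0}\int_{d_0}^{d_i}U_i(z)\,dz,$$ $$\tilde C_i(s_i)=\left(1+\frac{s_i}{(N-1)\kappa_0-Md_0}\right)C_i(s_i)-\frac{1}{(N-1)\kappa_0-Md_0}\int_0^{s_i}C_i(z)\,dz.$$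
   Context: A Nash equilibrium is a profile $(\tilde{\boldsymbol{\theta}}_d,\tilde{\boldsymbol{\theta}}_s)$ of nonnegative parameters such that no consumer and no supplier can strictly increase its own payoff by unilaterally changing its own parameter to another nonnegative value. *)

(* Defs.v *)
From Stdlib Require Import Reals.
From Coquelicot Require Import Coquelicot.
Open Scope R_scope.

(* sumR n f = f 0 + ... + f (n-1); players are indexed 0..n-1. *)
Fixpoint sumR (n : nat) (f : nat -> R) : R :=
  match n with O => 0 | S k => sumR k f + f k end.

Definition upd (f : nat -> R) (i : nat) (x : R) : nat -> R :=
  fun j => if Nat.eqb j i then x else f j.

Section Game.
Variables (M N : nat) (d0 k0 : R) (U C : nat -> R -> R).

Definition total (thd ths : nat -> R) : R := sumR M thd + sumR N ths.

Definition price (thd ths : nat -> R) : R :=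
  total thd ths / (INR N * k0 - INR M * d0).

Definition dalloc (thd ths : nat -> R) (i : nat) : R :=
  if Req_EM_T (total thd ths) 0 then d0 else d0 + thd i / price thd ths.

Definition salloc (thd ths : nat -> R) (i : nat) : R :=
  if Req_EM_T (total thd ths) 0 then k0 else k0 - ths i / price thd ths.

Definition pay_d (i : nat) (thd ths : nat -> R) : R :=
  U i (dalloc thd ths i) - price thd ths * d0 - thd i.

Definition pay_s (i : nat) (thd ths : nat -> R) : R :=
  price thd ths * k0 - ths i - C i (salloc thd ths i).

Definition is_NE (thd ths : nat -> R) : Prop :=
  (forall i, (i < M)%nat -> 0 <= thd i) /\
  (forall i, (i < N)%nat -> 0 <= ths i) /\
  (forall i, (i < M)%nat -> forall x, 0 <= x ->
      pay_d i (upd thd i x) ths <= pay_d i thd ths) /\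
  (forall i, (i < N)%nat -> forall x, 0 <= x ->
      pay_s i thd (upd ths i x) <= pay_s i thd ths).

Definition Utilde (i : nat) (d : R) : R :=
  (1 - d / (INR N * k0 - (INR M - 1) * d0)) * U i d
  + / (INR N * k0 - (INR M - 1) * d0) * RInt (U i) d0 d.

Definition Ctilde (i : nat) (s : R) : R :=
  (1 + s / ((INR N - 1) * k0 - INR M * d0)) * C i s
  - / ((INR N - 1) * k0 - INR M * d0) * RInt (C i) 0 s.

Definition feasible (d s : nat -> R) : Prop :=
  sumR M d = sumR N s /\
  (forall i, (i < N)%nat -> 0 <= s i <= k0) /\
  (forall i, (i < M)%nat -> d0 <= d i).

Definition objective (d s : nat -> R) : R :=
  sumR M (fun i => Utilde i (d i)) - sumR N (fun i => Ctilde i (s i)).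

Definition is_optimal (d s : nat -> R) : Prop :=
  feasible d s /\ forall d' s', feasible d' s' -> objective d' s' <= objective d s.
End Game.

Definition concave_on (D : R -> Prop) (f : R -> R) : Prop :=
  forall x y t, D x -> D y -> 0 <= t <= 1 ->
    t * f x + (1 - t) * f y <= f (t * x + (1 - t) * y).

Definition convex_on (D : R -> Prop) (f : R -> R) : Prop :=
  forall x y t, D x -> D y -> 0 <= t <= 1 ->
    f (t * x + (1 - t) * y) <= t * f x + (1 - t) * f y.

Definition strict_incr_on (D : R -> Prop) (f : R -> R) : Prop :=
  forall x y, D x -> D y -> x < y -> f x < f y.

Definition C1_on_halfline (a : R) (f : R -> R) : Prop :=
  exists f' : R -> R,
    (forall x, a < x -> is_derive f x (f' x)) /\
    filterlim (fun h => (f (a + h) - f a) / h) (at_right 0) (locally (f' a)) /\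
    (forall x, a <= x -> filterlim f' (within (fun y => a <= y) (locally x)) (locally (f' x))).

Definition C1_on_R (f : R -> R) : Prop :=
  (forall x, ex_derive f x) /\ (forall x, continuous (Derive f) x).

(* Main.v *)
Require Import Defs.
From Stdlib Require Import Reals.
From Coquelicot Require Import Coquelicot.
From Stdlib Require Import Lra Lia ClassicalEpsilon Classical FunctionalExtensionality.
Open Scope R_scope.

Lemma deriv_pos_right (f : R -> R) x l :
  derivable_pt_lim f x l -> 0 < l -> forall eta, 0 < eta ->
  exists y, x < y < x + eta /\ f x < f y.
Proof.
  intros H Hl eta Heta.
  destruct (H l Hl) as [d Hd].
  set (h := Rmin (d/2) (eta/2)).
  assert (Hd0 := cond_pos d).
  assert (hpos : 0 < h) by (unfold h; apply Rmin_case; lra).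
  assert (hle1 : h <= d/2) by apply Rmin_l.
  assert (hle2 : h <= eta/2) by apply Rmin_r.
  exists (x + h). split; [lra|].
  assert (Hq := Hd h ltac:(lra) ltac:(rewrite Rabs_pos_eq; lra)).
  apply Rabs_def2 in Hq. destruct Hq as [_ Hq].
  assert (0 < (f (x+h) - f x) / h) by lra.
  assert (0 < f (x + h) - f x).
  { replace (f (x+h) - f x) with (((f (x+h) - f x)/h) * h) by (field; lra).
    apply Rmult_lt_0_compat; lra. }
  lra.
Qed.

Lemma deriv_neg_left (f : R -> R) x l :
  derivable_pt_lim f x l -> l < 0 -> forall eta, 0 < eta ->
  exists y, x - eta < y < x /\ f x < f y.
Proof.
  intros H Hl eta Heta.
  destruct (H (-l) ltac:(lra)) as [d Hd].
  set (h := Rmin (d/2) (eta/2)).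
  assert (Hd0 := cond_pos d).
  assert (hpos : 0 < h) by (unfold h; apply Rmin_case; lra).
  assert (hle1 : h <= d/2) by apply Rmin_l.
  assert (hle2 : h <= eta/2) by apply Rmin_r.
  exists (x - h). split; [lra|].
  assert (Hq := Hd (-h) ltac:(lra) ltac:(rewrite Rabs_Ropp, Rabs_pos_eq; lra)).
  apply Rabs_def2 in Hq. destruct Hq as [Hq _].
  replace (x + - h) with (x - h) in Hq by ring.
  assert ((f (x-h) - f x) / (-h) < 0) by lra.
  assert (0 < f (x - h) - f x).
  { replace (f (x-h) - f x) with (- (((f (x-h) - f x)/(-h)) * h)) by (field; lra).
    assert (0 < - ((f (x - h) - f x) / - h) * h) by (apply Rmult_lt_0_compat; lra).
    lra. }
  lra.
Qed.

Lemma concave_slope (f f' : R -> R) (a x y : R) :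
  (forall z, a <= z -> forall t, 0 <= t <= 1 -> forall w, a <= w ->
      t * f z + (1 - t) * f w <= f (t * z + (1 - t) * w)) ->
  derivable_pt_lim f x (f' x) -> derivable_pt_lim f y (f' y) ->
  a <= x -> x < y ->
  f' y <= (f y - f x) / (y - x) <= f' x.
Proof.
  intros Hc Dx Dy Hax Hxy.
  set (S := (f y - f x) / (y - x)).
  split.
  - destruct (Rle_dec (f' y) S) as [?|Hn]; [assumption|exfalso].
    apply Rnot_le_lt in Hn.
    destruct (Dy (f' y - S) ltac:(lra)) as [d Hd].
    assert (Hd0 := cond_pos d).
    set (h := Rmin (d/2) (y - x)).
    assert (hpos : 0 < h) by (unfold h; apply Rmin_case; lra).
    assert (hle1 : h <= d/2) by apply Rmin_l.
    assert (hle2 : h <= y - x) by apply Rmin_r.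
    assert (Hq := Hd (-h) ltac:(lra) ltac:(rewrite Rabs_Ropp, Rabs_pos_eq; lra)).
    apply Rabs_def2 in Hq. destruct Hq as [HqA HqB].
    set (t := h / (y - x)).
    assert (Ht : 0 <= t <= 1).
    { unfold t; split. apply Rdiv_le_0_compat; lra.
      apply Rmult_le_reg_r with (y - x); [lra|]. field_simplify; lra. }
    assert (Hcc := Hc x Hax t Ht y ltac:(lra)).
    replace (t * x + (1 - t) * y) with (y + - h) in Hcc by (unfold t; field; lra).
    assert (E : f (y + - h) - f y >= t * (f x - f y)) by lra.
    assert (E2 : t * (f x - f y) = -h * S) by (unfold t, S; field; lra).
    assert ((f (y + - h) - f y) / - h <= S).
    { apply Rmult_le_reg_r with h; [lra|].
      replace ((f (y + - h) - f y) / - h * h) with (-(f (y + - h) - f y)) by (field; lra).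
      lra. }
    lra.
  - destruct (Rle_dec S (f' x)) as [?|Hn]; [assumption|exfalso].
    apply Rnot_le_lt in Hn.
    destruct (Dx (S - f' x) ltac:(lra)) as [d Hd].
    assert (Hd0 := cond_pos d).
    set (h := Rmin (d/2) (y - x)).
    assert (hpos : 0 < h) by (unfold h; apply Rmin_case; lra).
    assert (hle1 : h <= d/2) by apply Rmin_l.
    assert (hle2 : h <= y - x) by apply Rmin_r.
    assert (Hq := Hd h ltac:(lra) ltac:(rewrite Rabs_pos_eq; lra)).
    apply Rabs_def2 in Hq. destruct Hq as [HqA HqB].
    set (t := h / (y - x)).
    assert (Ht : 0 <= t <= 1).
    { unfold t; split. apply Rdiv_le_0_compat; lra.
      apply Rmult_le_reg_r with (y - x); [lra|]. field_simplify; lra. }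
    assert (Hcc := Hc y ltac:(lra) t Ht x Hax).
    replace (t * y + (1 - t) * x) with (x + h) in Hcc by (unfold t; field; lra).
    assert (E2 : t * (f y - f x) = h * S) by (unfold t, S; field; lra).
    assert (S <= (f (x + h) - f x) / h).
    { apply Rmult_le_reg_r with h; [lra|].
      replace ((f (x + h) - f x) / h * h) with (f (x + h) - f x) by (field; lra).
      lra. }
    lra.
Qed.

Section Inverse.
Variables (f : R -> R) (a b : R).
Hypothesis Hf : continuity f.
Hypothesis Hab : a < b.
Hypothesis Hdec : forall x y, a <= x -> x < y -> y <= b -> f y < f x.

Definition clampf (l : R) := Rmax (f b) (Rmin (f a) l).

Lemma clampf_bounds l : Rmin (f a) (f b) <= clampf l <= Rmax (f a) (f b).
Proof.
  assert (f b < f a) by (apply Hdec; lra).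
  rewrite Rmin_right, Rmax_left by lra. unfold clampf.
  split; [apply Rmax_l|]. apply Rmax_lub; [lra|apply Rmin_l].
Qed.

Definition Finv (l : R) : R := proj1_sig (IVT_gen f a b (clampf l) Hf (clampf_bounds l)).

Lemma Finv_spec l : a <= Finv l <= b /\ f (Finv l) = clampf l.
Proof.
  unfold Finv. destruct (IVT_gen f a b (clampf l) Hf (clampf_bounds l)) as [x [H1 H2]].
  simpl. rewrite Rmin_left, Rmax_right in H1 by lra. tauto.
Qed.

Lemma f_inj x y : a <= x <= b -> a <= y <= b -> f x = f y -> x = y.
Proof.
  intros Hx Hy E. destruct (Rtotal_order x y) as [H|[H|H]]; auto.
  - assert (f y < f x) by (apply Hdec; lra). lra.
  - assert (f x < f y) by (apply Hdec; lra). lra.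
Qed.

Lemma Finv_f x : a <= x <= b -> Finv (f x) = x.
Proof.
  intros Hx. destruct (Finv_spec (f x)) as [H1 H2].
  apply f_inj; auto. rewrite H2. unfold clampf.
  assert (f b <= f x).
  { destruct (Req_dec x b) as [->|]; [lra|]. left; apply Hdec; lra. }
  assert (f x <= f a).
  { destruct (Req_dec x a) as [->|]; [lra|]. left; apply Hdec; lra. }
  rewrite Rmin_right by lra. rewrite Rmax_right by lra. reflexivity.
Qed.

Lemma Finv_mono l m : l <= m -> Finv m <= Finv l.
Proof.
  intros Hlm. destruct (Finv_spec l) as [H1 H2]. destruct (Finv_spec m) as [H3 H4].
  destruct (Rle_dec (Finv m) (Finv l)) as [?|Hn]; auto. exfalso.
  apply Rnot_le_lt in Hn.
  assert (f (Finv m) < f (Finv l)) by (apply Hdec; lra).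
  rewrite H2, H4 in H. unfold clampf in H.
  assert (Rmin (f a) l <= Rmin (f a) m).
  { unfold Rmin. destruct (Rle_dec (f a) l), (Rle_dec (f a) m); lra. }
  assert (Rmax (f b) (Rmin (f a) l) <= Rmax (f b) (Rmin (f a) m)).
  { unfold Rmax. destruct (Rle_dec (f b) (Rmin (f a) l)), (Rle_dec (f b) (Rmin (f a) m)); lra. }
  lra.
Qed.

Lemma Finv_cont : continuity Finv.
Proof.
  intros l0. unfold continuity_pt, continue_in, limit1_in, limit_in. simpl. unfold R_dist.
  intros eps Heps.
  destruct (Finv_spec l0) as [H1 H2].
  set (x0 := Finv l0) in *.
  set (x1 := Rmax a (x0 - eps/2)).
  set (x2 := Rmin b (x0 + eps/2)).
  assert (fb_lt : f b < f a) by (apply Hdec; lra).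
  assert (Low : exists d1, 0 < d1 /\ forall l, l < l0 + d1 -> x1 <= Finv l).
  { destruct (Rle_dec (x0 - eps/2) a) as [Hc|Hc].
    - exists 1. split; [lra|]. intros l _. unfold x1. rewrite Rmax_left by lra.
      apply (Finv_spec l).
    - apply Rnot_le_lt in Hc. unfold x1. rewrite Rmax_right by lra.
      assert (Hf1 : f x0 < f (x0 - eps/2)) by (apply Hdec; lra).
      assert (Hcl : l0 <= clampf l0).
      { rewrite <- H2. unfold clampf in *. 
        assert (f (x0 - eps/2) <= f a).
        { destruct (Req_dec (x0 - eps/2) a) as [E|]; [rewrite E; lra|]. left; apply Hdec; lra. }
        unfold Rmax, Rmin in *. destruct (Rle_dec (f a) l0); destruct (Rle_dec (f b) _); lra. }
      exists (f (x0 - eps/2) - l0). split; [lra|].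
      intros l Hl.
      rewrite <- (Finv_f (x0 - eps/2)) by lra.
      apply Finv_mono. lra. }
  assert (High : exists d2, 0 < d2 /\ forall l, l0 - d2 < l -> Finv l <= x2).
  { destruct (Rle_dec b (x0 + eps/2)) as [Hc|Hc].
    - exists 1. split; [lra|]. intros l _. unfold x2. rewrite Rmin_left by lra.
      apply (Finv_spec l).
    - apply Rnot_le_lt in Hc. unfold x2. rewrite Rmin_right by lra.
      assert (Hf1 : f (x0 + eps/2) < f x0) by (apply Hdec; lra).
      assert (Hcl : clampf l0 <= l0).
      { rewrite <- H2. unfold clampf in *.
        assert (f b <= f (x0 + eps/2)).
        { destruct (Req_dec (x0 + eps/2) b) as [E|]; [rewrite E; lra|]. left; apply Hdec; lra. }
        unfold Rmax, Rmin in *. destruct (Rle_dec (f a) l0); destruct (Rle_dec (f b) _); lra. }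
      exists (l0 - f (x0 + eps/2)). split; [lra|].
      intros l Hl.
      rewrite <- (Finv_f (x0 + eps/2)) by lra.
      apply Finv_mono. lra. }
  destruct Low as [d1 [Hd1 Hlow]]. destruct High as [d2 [Hd2 Hhigh]].
  exists (Rmin d1 d2). split; [apply Rmin_case; lra|].
  intros l [_ Hl].
  assert (Rmin d1 d2 <= d1) by apply Rmin_l. assert (Rmin d1 d2 <= d2) by apply Rmin_r.
  apply Rabs_def2 in Hl. destruct Hl as [HlA HlB].
  assert (L1 := Hlow l ltac:(lra)). assert (L2 := Hhigh l ltac:(lra)).
  assert (x0 - eps/2 <= x1) by apply Rmax_r.
  assert (x2 <= x0 + eps/2) by apply Rmin_r.
  apply Rabs_def1; lra.
Qed.

End Inverse.

Lemma ball_R x e y : ball x e y <-> Rabs (y - x) < e.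
Proof.
  unfold ball; simpl; unfold AbsRing_ball, abs, minus, plus, opp; simpl. tauto.
Qed.

Lemma ball_R2 (x e y : R) : @ball (AbsRing_UniformSpace R_AbsRing) x e y <-> Rabs (y - x) < e.
Proof.
  unfold ball; simpl; unfold AbsRing_ball, abs, minus, plus, opp; simpl. tauto.
Qed.

Section Ext.
Variables (U Up : R -> R) (d0 : R).
Hypothesis HD : forall x, d0 < x -> is_derive U x (Up x).
Hypothesis HR : filterlim (fun h => (U (d0 + h) - U d0) / h) (at_right 0) (locally (Up d0)).
Hypothesis HC : forall x, d0 <= x ->
  filterlim Up (within (fun y => d0 <= y) (locally x)) (locally (Up x)).

Definition Ue (x : R) : R := if Rle_dec d0 x then U x else U d0 + Up d0 * (x - d0).
Definition Upe (x : R) : R := if Rle_dec d0 x then Up x else Up d0.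

Lemma Ue_eq x : d0 <= x -> Ue x = U x.
Proof. intros H. unfold Ue. destruct (Rle_dec d0 x); [reflexivity|lra]. Qed.

Lemma Upe_eq x : d0 <= x -> Upe x = Up x.
Proof. intros H. unfold Upe. destruct (Rle_dec d0 x); [reflexivity|lra]. Qed.

Lemma Ue_deriv x : derivable_pt_lim Ue x (Upe x).
Proof.
  destruct (Rtotal_order x d0) as [Hx|[Hx|Hx]].
  - apply is_derive_Reals.
    unfold Upe; destruct (Rle_dec d0 x); [lra|].
    apply is_derive_ext_loc with (f := fun y => U d0 + Up d0 * (y - d0)).
    + assert (Hp : 0 < d0 - x) by lra.
      exists (mkposreal _ Hp). intros y Hy. apply ball_R2 in Hy. simpl in Hy.
      apply Rabs_def2 in Hy. destruct Hy as [Hy1 Hy2]. unfold minus, plus, opp in Hy1, Hy2; simpl in Hy1, Hy2. unfold Ue. destruct (Rle_dec d0 y); [lra|reflexivity].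
    + auto_derive; [auto|ring].
  - subst x. intros eps Heps.
    pose proof (proj1 (filterlim_locally (F := at_right 0) _ _) HR) as HR'.
    destruct (HR' (mkposreal _ Heps)) as [d Hd].
    exists d. intros h Hh0 Hh.
    destruct (Rtotal_order h 0) as [Hn|[Hn|Hn]]; [|lra|].
    + unfold Upe, Ue. destruct (Rle_dec d0 d0); [|lra].
      destruct (Rle_dec d0 (d0 + h)); [lra|].
      replace ((U d0 + Up d0 * (d0 + h - d0) - U d0) / h - Up d0) with 0 by (field; lra).
      rewrite Rabs_R0; lra.
    + assert (B : ball 0 d h) by (apply ball_R; rewrite Rminus_0_r; exact Hh).
      specialize (Hd h B Hn). apply ball_R in Hd. simpl in Hd.
      unfold Upe, Ue. destruct (Rle_dec d0 d0); [|lra].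
      destruct (Rle_dec d0 (d0 + h)); [|lra]. exact Hd.
  - apply is_derive_Reals.
    unfold Upe; destruct (Rle_dec d0 x); [|lra].
    apply is_derive_ext_loc with (f := U).
    + assert (Hp : 0 < x - d0) by lra.
      exists (mkposreal _ Hp). intros y Hy. apply ball_R2 in Hy. simpl in Hy.
      apply Rabs_def2 in Hy. destruct Hy as [Hy1 Hy2]. unfold minus, plus, opp in Hy1, Hy2; simpl in Hy1, Hy2. unfold Ue. destruct (Rle_dec d0 y); [reflexivity|lra].
    + apply HD; lra.
Qed.

Lemma Upe_cont : continuity Upe.
Proof.
  intros x. unfold continuity_pt, continue_in, limit1_in, limit_in. simpl. unfold R_dist.
  intros eps Heps.
  destruct (Rle_dec d0 x) as [Hx|Hx].
  - pose proof (proj1 (filterlim_locally (F := within (fun y => d0 <= y) (locally x)) _ _) (HC x Hx)) as H.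
    destruct (H (mkposreal _ Heps)) as [d Hd].
    exists d. split; [apply cond_pos|].
    intros y [_ Hy].
    rewrite (Upe_eq x Hx).
    unfold Upe. destruct (Rle_dec d0 y) as [Hy0|Hy0].
    + assert (B : ball x d y) by (apply ball_R; exact Hy).
      specialize (Hd y B Hy0). apply ball_R in Hd. exact Hd.
    + assert (B : ball x d d0).
      { apply ball_R. apply Rabs_def2 in Hy. apply Rabs_def1; lra. }
      specialize (Hd d0 B (Rle_refl _)). apply ball_R in Hd. exact Hd.
  - exists (d0 - x). split; [lra|].
    intros y [_ Hy]. apply Rabs_def2 in Hy. destruct Hy.
    unfold Upe. destruct (Rle_dec d0 y); [lra|]. destruct (Rle_dec d0 x); [lra|].
    rewrite Rminus_diag, Rabs_R0; lra.
Qed.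

End Ext.

Lemma cont_of_deriv f x l : derivable_pt_lim f x l -> continuity_pt f x.
Proof. intros H. apply derivable_continuous_pt. exists l. exact H. Qed.

Section BR.
Variables (P P' c G : R -> R).
Hypothesis HdP : forall x, 0 <= x -> derivable_pt_lim P x (P' x).
Hypothesis Hsign : forall x, 0 <= x -> 0 < c x /\ P' x = c x * G x.
Hypothesis Hdec : forall x y, 0 <= x -> x < y -> G y < G x.

Definition KKT1 (t : R) := (0 < t /\ G t = 0) \/ (t = 0 /\ G 0 <= 0).

Lemma br_suff t : KKT1 t -> forall x, 0 <= x -> P x <= P t.
Proof.
  intros H x Hx.
  assert (Ht : 0 <= t /\ G t <= 0 /\ (0 < t -> G t = 0)).
  { destruct H as [[H1 H2]|[H1 H2]]; subst; repeat split; try lra. }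
  destruct Ht as [Ht0 [HGt HGt']].
  destruct (Rtotal_order x t) as [Hlt|[Heq|Hgt]].
  - destruct (MVT_gen P x t P') as [c0 [Hc0 Eq]].
    + intros y Hy. rewrite Rmin_left in Hy by lra. apply is_derive_Reals, HdP. lra.
    + intros y Hy. rewrite Rmin_left in Hy by lra. apply (cont_of_deriv _ _ (P' y)), HdP. lra.
    + rewrite Rmin_left, Rmax_right in Hc0 by lra.
      assert (0 <= P' c0).
      { destruct (Hsign c0 ltac:(lra)) as [Hc Hp]. rewrite Hp.
        destruct (Req_dec c0 t) as [->|Hne].
        - rewrite HGt' by lra. lra.
        - assert (G t < G c0) by (apply Hdec; lra). rewrite HGt' in H0 by lra.
          apply Rmult_le_pos; lra. }
      assert (0 <= P' c0 * (t - x)) by (apply Rmult_le_pos; lra). lra.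
  - subst; lra.
  - destruct (MVT_gen P t x P') as [c0 [Hc0 Eq]].
    + intros y Hy. rewrite Rmin_left in Hy by lra. apply is_derive_Reals, HdP. lra.
    + intros y Hy. rewrite Rmin_left in Hy by lra. apply (cont_of_deriv _ _ (P' y)), HdP. lra.
    + rewrite Rmin_left, Rmax_right in Hc0 by lra.
      assert (P' c0 <= 0).
      { destruct (Hsign c0 ltac:(lra)) as [Hc Hp]. rewrite Hp.
        destruct (Req_dec c0 t) as [->|Hne].
        - assert (0 <= c t * (- G t)) by (apply Rmult_le_pos; lra). lra.
        - assert (G c0 < G t) by (apply Hdec; lra).
          assert (0 <= c c0 * (- G c0)) by (apply Rmult_le_pos; lra). lra. }
      assert (0 <= - P' c0 * (x - t)) by (apply Rmult_le_pos; lra). lra.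
Qed.

Lemma br_nec t : 0 <= t -> (forall x, 0 <= x -> P x <= P t) -> KKT1 t.
Proof.
  intros Ht Hmax. unfold KKT1.
  destruct (Hsign t Ht) as [Hc Hp].
  assert (HG : G t <= 0).
  { destruct (Rle_dec (G t) 0) as [?|Hn]; auto. exfalso. apply Rnot_le_lt in Hn.
    assert (0 < P' t) by (rewrite Hp; apply Rmult_lt_0_compat; lra).
    destruct (deriv_pos_right P t (P' t) (HdP t Ht) H 1 ltac:(lra)) as [y [Hy1 Hy2]].
    specialize (Hmax y ltac:(lra)). lra. }
  destruct (Req_dec t 0) as [->|Hne]; [right; lra|left].
  split; [lra|].
  destruct (Req_dec (G t) 0) as [?|Hn]; auto. exfalso.
  assert (P' t < 0).
  { rewrite Hp. assert (0 < c t * (- G t)) by (apply Rmult_lt_0_compat; lra). lra. }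
  destruct (deriv_neg_left P t (P' t) (HdP t Ht) H t ltac:(lra)) as [y [Hy1 Hy2]].
  specialize (Hmax y ltac:(lra)). lra.
Qed.
End BR.

Section Consumer.
Variables (U Up : R -> R) (d0 K D : R).
Hypothesis Hd0 : 0 < d0.
Hypothesis HDp : 0 < D.
Hypothesis HKD : K = D + d0.
Hypothesis HD : forall x, d0 < x -> is_derive U x (Up x).
Hypothesis HR : filterlim (fun h => (U (d0 + h) - U d0) / h) (at_right 0) (locally (Up d0)).
Hypothesis HC : forall x, d0 <= x ->
  filterlim Up (within (fun y => d0 <= y) (locally x)) (locally (Up x)).
Hypothesis Hconc : concave_on (fun x => d0 <= x) U.
Hypothesis Hincr : strict_incr_on (fun x => d0 <= x) U.

Let Uf := Ue U Up d0.
Let Uq := Upe Up d0.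

Lemma Uf_der x : derivable_pt_lim Uf x (Uq x).
Proof. apply Ue_deriv; auto. Qed.

Lemma Uf_is_der x : is_derive Uf x (Uq x).
Proof. apply is_derive_Reals, Uf_der. Qed.

Lemma Uf_conc : forall z, d0 <= z -> forall t, 0 <= t <= 1 -> forall w, d0 <= w ->
  t * Uf z + (1 - t) * Uf w <= Uf (t * z + (1 - t) * w).
Proof.
  intros z Hz t Ht w Hw. unfold Uf.
  assert (d0 <= t * z + (1 - t) * w) by nra.
  rewrite !Ue_eq by auto. apply Hconc; auto.
Qed.

Lemma Uq_slope x y : d0 <= x -> x < y -> Uq y <= (Uf y - Uf x) / (y - x) <= Uq x.
Proof. intros. apply (concave_slope Uf Uq d0); auto using Uf_der, Uf_conc. Qed.

Lemma Uq_pos x : d0 <= x -> 0 < Uq x.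
Proof.
  intros Hx. destruct (Uq_slope x (x + 1) Hx ltac:(lra)) as [_ H].
  assert (U x < U (x + 1)) by (apply Hincr; simpl; lra).
  unfold Uf in H. rewrite !Ue_eq in H by lra.
  replace (x + 1 - x) with 1 in H by ring. lra.
Qed.

Lemma Uq_mono x y : d0 <= x -> x <= y -> Uq y <= Uq x.
Proof.
  intros Hx Hxy. destruct (Req_dec x y) as [->|Hne]; [lra|].
  destruct (Uq_slope x y Hx ltac:(lra)). lra.
Qed.

Definition gC (x : R) := (1 - x / K) * Uq x.

Lemma gC_cont : continuity gC.
Proof.
  intros x. unfold gC. apply continuity_pt_mult.
  - apply continuity_pt_minus; [apply continuity_pt_const; intros ? ?; auto|].
    apply continuity_pt_mult; [apply derivable_continuous_pt, derivable_pt_id|apply continuity_pt_const; intros ? ?; auto].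
  - apply Upe_cont; auto.
Qed.

Lemma gC_dec x y : d0 <= x -> x < y -> y <= K -> gC y < gC x.
Proof.
  intros Hx Hxy HyK. unfold gC.
  assert (HK : 0 < K) by lra.
  assert (0 <= 1 - y / K).
  { apply Rmult_le_reg_r with K; [lra|]. field_simplify; lra. }
  assert (1 - y / K < 1 - x / K).
  { apply Rplus_lt_compat_l, Ropp_lt_contravar. apply Rmult_lt_compat_r; [apply Rinv_0_lt_compat; lra|lra]. }
  assert (Uq y <= Uq x) by (apply Uq_mono; lra).
  assert (0 < Uq y) by (apply Uq_pos; lra).
  apply Rle_lt_trans with ((1 - y/K) * Uq x).
  - apply Rmult_le_compat_l; lra.
  - apply Rmult_lt_compat_r; [apply Uq_pos|]; lra.
Qed.

Lemma gC_anti x y : d0 <= x -> x <= y -> y <= K -> gC y <= gC x.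
Proof.
  intros. destruct (Req_dec x y) as [->|]; [lra|]. left; apply gC_dec; lra.
Qed.

Lemma gC_K : gC K = 0.
Proof. unfold gC. replace (1 - K / K) with 0 by (field; lra). ring. Qed.

Lemma gC_d0 : 0 < gC d0.
Proof.
  unfold gC. apply Rmult_lt_0_compat; [|apply Uq_pos; lra].
  assert (d0 / K < 1).
  { apply Rmult_lt_reg_r with K; [lra|]. field_simplify; lra. }
  lra.
Qed.

Definition UtC (x : R) := (1 - x / K) * Uf x + / K * RInt Uf d0 x.

Lemma Uf_cont x : continuous Uf x.
Proof. apply continuity_pt_filterlim, (cont_of_deriv _ _ (Uq x)), Uf_der. Qed.

Lemma UtC_der x : is_derive UtC x (gC x).
Proof.
  assert (HI : is_derive (fun y => RInt Uf d0 y) x (Uf x)).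
  { apply (is_derive_RInt Uf (fun y => RInt Uf d0 y) d0 x); [|apply Uf_cont].
    exists (mkposreal 1 Rlt_0_1). intros y _. apply (RInt_correct (V := R_CompleteNormedModule)).
    apply (ex_RInt_continuous (V := R_CompleteNormedModule)). intros; apply Uf_cont. }
  unfold UtC, gC.
  auto_derive.
  - repeat split; try lra.
    + exists (Uq x). apply Uf_is_der.
    + apply (ex_RInt_continuous (V := R_CompleteNormedModule)). intros; apply Uf_cont.
    + exists (mkposreal 1 Rlt_0_1). intros y _. apply (cont_of_deriv _ _ (Uq y)), Uf_der.
  - replace (Derive (fun y => Uf y) x) with (Uq x) by (symmetry; apply is_derive_unique, Uf_is_der). field. lra.
Qed.

Lemma UtC_eq x : d0 <= x -> (1 - x / K) * U x + / K * RInt U d0 x = UtC x.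
Proof.
  intros Hx. unfold UtC. unfold Uf. rewrite Ue_eq by auto. f_equal. f_equal.
  apply RInt_ext. intros y Hy. rewrite Rmin_left, Rmax_right in Hy by lra.
  rewrite Ue_eq by lra. reflexivity.
Qed.

Lemma UtC_mvt a b : exists c, Rmin a b <= c <= Rmax a b /\ UtC b - UtC a = gC c * (b - a).
Proof.
  apply MVT_gen.
  - intros; apply UtC_der.
  - intros y _. apply (cont_of_deriv _ _ (gC y)). apply is_derive_Reals, UtC_der.
Qed.

Lemma UtC_support ds p d' :
  d0 <= ds <= K -> gC ds <= p -> (d0 < ds -> gC ds = p) ->
  d0 <= d' <= K -> d' <> ds -> UtC d' < UtC ds + p * (d' - ds).
Proof.
  intros Hds Hg Hg' Hd' Hne.
  set (m := (ds + d') / 2).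
  destruct (UtC_mvt ds m) as [c2 [Hc2 E2]].
  destruct (UtC_mvt m d') as [c1 [Hc1 E1]].
  destruct (Rtotal_order ds d') as [Hlt|[Heq|Hgt]]; [|lra|].
  - rewrite Rmin_left, Rmax_right in Hc1, Hc2 by (unfold m; lra).
    assert (gC c1 <= gC m) by (apply gC_anti; unfold m in *; lra).
    assert (gC m < gC ds) by (apply gC_dec; unfold m in *; lra).
    assert (gC c2 <= gC ds) by (apply gC_anti; unfold m in *; lra).
    assert (gC c1 * (d' - m) < p * (d' - m)) by (apply Rmult_lt_compat_r; unfold m; lra).
    assert (gC c2 * (m - ds) <= p * (m - ds)) by (apply Rmult_le_compat_r; unfold m; lra).
    replace (d' - ds) with ((d' - m) + (m - ds)) by ring. lra.
  - rewrite Rmin_right, Rmax_left in Hc1, Hc2 by (unfold m; lra).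
    assert (Hp : gC ds = p) by (apply Hg'; lra).
    assert (gC m <= gC c1) by (apply gC_anti; unfold m in *; lra).
    assert (gC ds < gC m) by (apply gC_dec; unfold m in *; lra).
    assert (gC ds <= gC c2) by (apply gC_anti; unfold m in *; lra).
    assert (p * (m - d') < gC c1 * (m - d')) by (apply Rmult_lt_compat_r; unfold m; lra).
    assert (p * (ds - m) <= gC c2 * (ds - m)) by (apply Rmult_le_compat_r; unfold m; lra).
    replace (d' - ds) with ((d' - m) + (m - ds)) by ring. lra.
Qed.

(* payoff of a consumer as a function of own bid, others' total T *)
Definition ddC (T x : R) := d0 + D * x / (T + x).
Definition phiC (T x : R) := Uf (ddC T x) - (T + x) / D * d0 - x.
Definition phiC' (T x : R) := Uq (ddC T x) * (D * T / (T + x) ^ 2) - d0 / D - 1.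
Definition GamC (T x : R) := gC (ddC T x) - (T + x) / D.

Lemma phiC_der T x : 0 < T -> 0 <= x -> derivable_pt_lim (phiC T) x (phiC' T x).
Proof.
  intros HT Hx. apply is_derive_Reals. unfold phiC, phiC', ddC.
  auto_derive.
  - repeat split; try lra. exists (Uq (d0 + D * x / (T + x))). apply Uf_is_der.
  - rewrite (is_derive_unique _ _ _ (Uf_is_der _)). unfold Rdiv. field. lra.
Qed.

Lemma ddC_bounds T x : 0 < T -> 0 <= x -> d0 <= ddC T x < K.
Proof.
  intros HT Hx. unfold ddC. split.
  - assert (0 <= D * x / (T + x)) by (apply Rdiv_le_0_compat; nra). lra.
  - assert (D * x / (T + x) < D).
    { apply Rmult_lt_reg_r with (T + x); [lra|]. field_simplify; nra. }
    lra.
Qed.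

Lemma phiC_sign T x : 0 < T -> 0 <= x -> 0 < K / (T + x) /\ phiC' T x = K / (T + x) * GamC T x.
Proof.
  intros HT Hx. split; [apply Rdiv_lt_0_compat; lra|].
  unfold phiC', GamC, gC, ddC. rewrite HKD. field. lra.
Qed.

Lemma GamC_dec T x y : 0 < T -> 0 <= x -> x < y -> GamC T y < GamC T x.
Proof.
  intros HT Hx Hxy. unfold GamC.
  destruct (ddC_bounds T x HT Hx). destruct (ddC_bounds T y HT ltac:(lra)).
  assert (ddC T x < ddC T y).
  { unfold ddC. apply Rplus_lt_compat_l.
    replace (D * x / (T + x)) with (D - D * T * / (T + x)) by (field; lra).
    replace (D * y / (T + y)) with (D - D * T * / (T + y)) by (field; lra).
    apply Rplus_lt_compat_l, Ropp_lt_contravar.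
    apply Rmult_lt_compat_l; [nra|]. apply Rinv_lt_contravar; nra. }
  assert (gC (ddC T y) < gC (ddC T x)) by (apply gC_dec; lra).
  assert ((T + x) / D < (T + y) / D) by (apply Rmult_lt_compat_r; [apply Rinv_0_lt_compat|]; lra).
  lra.
Qed.

Lemma consC_suff T t : 0 < T -> KKT1 (GamC T) t -> forall x, 0 <= x -> phiC T x <= phiC T t.
Proof.
  intros HT. apply br_suff with (P' := phiC' T) (c := fun x => K / (T + x)).
  - intros; apply phiC_der; auto.
  - intros; apply phiC_sign; auto.
  - intros; apply GamC_dec; auto.
Qed.

Lemma consC_nec T t : 0 < T -> 0 <= t -> (forall x, 0 <= x -> phiC T x <= phiC T t) -> KKT1 (GamC T) t.
Proof.
  intros HT. apply br_nec with (P' := phiC' T) (c := fun x => K / (T + x)).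
  - intros; apply phiC_der; auto.
  - intros; apply phiC_sign; auto.
Qed.

Lemma phiC_eq T x : 0 < T -> 0 <= x -> phiC T x = U (ddC T x) - (T + x) / D * d0 - x.
Proof.
  intros HT Hx. unfold phiC, Uf. rewrite Ue_eq; [reflexivity|]. apply ddC_bounds; auto.
Qed.

End Consumer.

Section Supplier.
Variables (C : R -> R) (k0 D L : R).
Hypothesis Hk0 : 0 < k0.
Hypothesis HLD : L = D - k0.
Hypothesis HLp : 0 < L.
Hypothesis HC1 : C1_on_R C.
Hypothesis Hconv : convex_on (fun _ => True) C.
Hypothesis Hincr : strict_incr_on (fun x => 0 <= x) C.
Hypothesis H0 : forall s, s <= 0 -> C s = 0.

Let Cq := Derive C.

Lemma Cq_is_der x : is_derive C x (Cq x).
Proof. apply Derive_correct. apply HC1. Qed.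

Lemma Cq_der x : derivable_pt_lim C x (Cq x).
Proof. apply is_derive_Reals, Cq_is_der. Qed.

Lemma Cq_cont : continuity Cq.
Proof. intros x. apply continuity_pt_filterlim. apply HC1. Qed.

Lemma Cq_neg s : s < 0 -> Cq s = 0.
Proof.
  intros Hs. unfold Cq. rewrite (Derive_ext_loc C (fun _ => 0)).
  - apply Derive_const.
  - assert (Hp : 0 < - s) by lra. exists (mkposreal _ Hp). intros y Hy.
    apply ball_R2 in Hy. simpl in Hy. apply Rabs_def2 in Hy. destruct Hy as [Hy1 Hy2]. unfold minus, plus, opp in Hy1, Hy2; simpl in Hy1, Hy2. apply H0. lra.
Qed.

Lemma Cq_zero : Cq 0 = 0.
Proof.
  destruct (Req_dec (Cq 0) 0) as [?|Hn]; auto. exfalso.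
  assert (Hc := Cq_cont 0).
  unfold continuity_pt, continue_in, limit1_in, limit_in in Hc. simpl in Hc. unfold R_dist in Hc.
  destruct (Hc (Rabs (Cq 0)) ltac:(apply Rabs_pos_lt; auto)) as [d [Hd Hd']].
  specialize (Hd' (- d / 2)). rewrite Cq_neg in Hd' by lra.
  assert (HH : (True /\ 0 <> - d / 2) /\ Rabs (- d / 2 - 0) < d).
  { split; [split; auto; lra|]. replace (- d / 2 - 0) with (- (d / 2)) by field. rewrite Rabs_Ropp, Rabs_pos_eq; lra. }
  specialize (Hd' HH). rewrite Rminus_0_l, Rabs_Ropp in Hd'. lra.
Qed.

Lemma Cq_nonpos s : s <= 0 -> Cq s = 0.
Proof. intros Hs. destruct (Req_dec s 0) as [->|]; [apply Cq_zero|apply Cq_neg; lra]. Qed.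

Lemma Cq_slope x y : x < y -> Cq x <= (C y - C x) / (y - x) <= Cq y.
Proof.
  intros Hxy.
  assert (H := concave_slope (fun z => - C z) (fun z => - Cq z) x x y).
  assert (E : (- C y - - C x) / (y - x) = - ((C y - C x) / (y - x))) by (field; lra).
  destruct H as [H1 H2].
  - intros z _ t Ht w _. specialize (Hconv z w t I I Ht). lra.
  - apply derivable_pt_lim_opp, Cq_der.
  - apply derivable_pt_lim_opp, Cq_der.
  - lra.
  - lra.
  - rewrite E in H1, H2. lra.
Qed.

Lemma Cq_mono x y : x <= y -> Cq x <= Cq y.
Proof.
  intros H. destruct (Req_dec x y) as [->|]; [lra|]. destruct (Cq_slope x y); lra.
Qed.

Lemma Cq_pos s : 0 < s -> 0 < Cq s.
Proof.
  intros Hs. destruct (Cq_slope 0 s Hs) as [_ H].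
  assert (C 0 < C s) by (apply Hincr; simpl; lra).
  assert (0 < (C s - C 0) / (s - 0)) by (apply Rdiv_lt_0_compat; lra). lra.
Qed.

Definition hS (s : R) := (1 + s / L) * Cq s.

Lemma hS_cont : continuity hS.
Proof.
  intros x. unfold hS. apply continuity_pt_mult.
  - apply continuity_pt_plus; [apply continuity_pt_const; intros ? ?; auto|].
    apply continuity_pt_mult; [apply derivable_continuous_pt, derivable_pt_id|apply continuity_pt_const; intros ? ?; auto].
  - apply Cq_cont.
Qed.

Lemma hS_inc x y : 0 <= x -> x < y -> hS x < hS y.
Proof.
  intros Hx Hxy. unfold hS.
  assert (0 < 1 + x / L) by (assert (0 <= x / L) by (apply Rdiv_le_0_compat; lra); lra).
  assert (1 + x / L < 1 + y / L) by (apply Rplus_lt_compat_l, Rmult_lt_compat_r; [apply Rinv_0_lt_compat|]; lra).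
  assert (Cq x <= Cq y) by (apply Cq_mono; lra).
  assert (0 < Cq y) by (apply Cq_pos; lra).
  apply Rle_lt_trans with ((1 + x / L) * Cq y).
  - apply Rmult_le_compat_l; lra.
  - apply Rmult_lt_compat_r; lra.
Qed.

Lemma hS_nonpos s : s <= 0 -> hS s = 0.
Proof. intros. unfold hS. rewrite Cq_nonpos by auto. ring. Qed.

Lemma hS_pos s : 0 < s -> 0 < hS s.
Proof. intros. rewrite <- (hS_nonpos 0) by lra. apply hS_inc; lra. Qed.

Lemma hS_mono x y : - L < x -> x <= y -> hS x <= hS y.
Proof.
  intros Hx Hxy.
  destruct (Rle_dec y 0).
  - rewrite !hS_nonpos by lra. lra.
  - destruct (Rle_dec x 0).
    + rewrite (hS_nonpos x) by lra. left; apply hS_pos; lra.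
    + destruct (Req_dec x y) as [->|]; [lra|]. left; apply hS_inc; lra.
Qed.

Definition CtS (s : R) := (1 + s / L) * C s - / L * RInt C 0 s.

Lemma C_cont x : continuous C x.
Proof. apply continuity_pt_filterlim, (cont_of_deriv _ _ (Cq x)), Cq_der. Qed.

Lemma CtS_der x : is_derive CtS x (hS x).
Proof.
  unfold CtS, hS.
  auto_derive.
  - repeat split; try lra.
    + apply HC1.
    + apply (ex_RInt_continuous (V := R_CompleteNormedModule)). intros; apply C_cont.
    + exists (mkposreal 1 Rlt_0_1). intros y _. apply (cont_of_deriv _ _ (Cq y)), Cq_der.
  - change (Derive (fun y => C y) x) with (Cq x). field. lra.
Qed.

Lemma CtS_mvt a b : exists c, Rmin a b <= c <= Rmax a b /\ CtS b - CtS a = hS c * (b - a).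
Proof.
  apply MVT_gen.
  - intros; apply CtS_der.
  - intros y _. apply (cont_of_deriv _ _ (hS y)). apply is_derive_Reals, CtS_der.
Qed.

Lemma CtS_support ss p s' :
  0 <= ss <= k0 -> hS ss <= p -> (ss < k0 -> hS ss = p) ->
  0 <= s' <= k0 -> s' <> ss -> CtS ss + p * (s' - ss) < CtS s'.
Proof.
  intros Hss Hg Hg' Hs' Hne.
  set (m := (ss + s') / 2).
  destruct (CtS_mvt ss m) as [c2 [Hc2 E2]].
  destruct (CtS_mvt m s') as [c1 [Hc1 E1]].
  assert (Anti : forall x y, 0 <= x -> x <= y -> hS x <= hS y).
  { intros x y Hx Hxy. destruct (Req_dec x y) as [->|]; [lra|]. left; apply hS_inc; lra. }
  destruct (Rtotal_order ss s') as [Hlt|[Heq|Hgt]]; [|lra|].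
  - rewrite Rmin_left, Rmax_right in Hc1, Hc2 by (unfold m; lra).
    assert (Hp : hS ss = p) by (apply Hg'; lra).
    assert (hS m <= hS c1) by (apply Anti; unfold m in *; lra).
    assert (hS ss < hS m) by (apply hS_inc; unfold m in *; lra).
    assert (hS ss <= hS c2) by (apply Anti; unfold m in *; lra).
    assert (p * (s' - m) < hS c1 * (s' - m)) by (apply Rmult_lt_compat_r; unfold m; lra).
    assert (p * (m - ss) <= hS c2 * (m - ss)) by (apply Rmult_le_compat_r; unfold m; lra).
    replace (s' - ss) with ((s' - m) + (m - ss)) by ring. lra.
  - rewrite Rmin_right, Rmax_left in Hc1, Hc2 by (unfold m; lra).
    assert (hS c1 <= hS m) by (apply Anti; unfold m in *; lra).
    assert (hS m < hS ss) by (apply hS_inc; unfold m in *; lra).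
    assert (hS c2 <= hS ss) by (apply Anti; unfold m in *; lra).
    assert (hS c1 * (m - s') < p * (m - s')) by (apply Rmult_lt_compat_r; unfold m; lra).
    assert (hS c2 * (ss - m) <= p * (ss - m)) by (apply Rmult_le_compat_r; unfold m; lra).
    replace (s' - ss) with ((s' - m) + (m - ss)) by ring. lra.
Qed.

Definition ssS (T x : R) := k0 - D * x / (T + x).
Definition psiS (T x : R) := (T + x) / D * k0 - x - C (ssS T x).
Definition psiS' (T x : R) := k0 / D - 1 - Cq (ssS T x) * (- (D * T / (T + x) ^ 2)).
Definition GamS (T x : R) := hS (ssS T x) - (T + x) / D.

Lemma psiS_der T x : 0 < T -> 0 <= x -> derivable_pt_lim (psiS T) x (psiS' T x).
Proof.
  intros HT Hx. apply is_derive_Reals. unfold psiS, psiS', ssS.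
  assert (0 < D) by lra.
  auto_derive.
  - repeat split; try lra. apply HC1.
  - change (Derive (fun y => C y) (k0 + - (D * x * / (T + x)))) with (Cq (k0 - D * x / (T + x))). unfold Rdiv. field. lra.
Qed.

Lemma ssS_bounds T x : 0 < T -> 0 <= x -> - L < ssS T x <= k0.
Proof.
  intros HT Hx. unfold ssS. split.
  - assert (D * x / (T + x) < D).
    { apply Rmult_lt_reg_r with (T + x); [lra|]. field_simplify; nra. }
    lra.
  - assert (0 <= D * x / (T + x)) by (apply Rdiv_le_0_compat; nra). lra.
Qed.

Lemma psiS_sign T x : 0 < T -> 0 <= x -> 0 < L / (T + x) /\ psiS' T x = L / (T + x) * GamS T x.
Proof.
  intros HT Hx. split; [apply Rdiv_lt_0_compat; lra|].
  unfold psiS', GamS, hS, ssS. fold Cq. rewrite HLD. field. lra.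
Qed.

Lemma GamS_dec T x y : 0 < T -> 0 <= x -> x < y -> GamS T y < GamS T x.
Proof.
  intros HT Hx Hxy. unfold GamS.
  destruct (ssS_bounds T x HT Hx). destruct (ssS_bounds T y HT ltac:(lra)).
  assert (ssS T y < ssS T x).
  { unfold ssS. apply Rplus_lt_compat_l, Ropp_lt_contravar.
    replace (D * x / (T + x)) with (D - D * T * / (T + x)) by (field; lra).
    replace (D * y / (T + y)) with (D - D * T * / (T + y)) by (field; lra).
    apply Rplus_lt_compat_l, Ropp_lt_contravar.
    apply Rmult_lt_compat_l; [nra|]. apply Rinv_lt_contravar; nra. }
  assert (hS (ssS T y) <= hS (ssS T x)) by (apply hS_mono; lra).
  assert ((T + x) / D < (T + y) / D) by (apply Rmult_lt_compat_r; [apply Rinv_0_lt_compat|]; lra).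
  lra.
Qed.

Lemma supS_suff T t : 0 < T -> KKT1 (GamS T) t -> forall x, 0 <= x -> psiS T x <= psiS T t.
Proof.
  intros HT. apply br_suff with (P' := psiS' T) (c := fun x => L / (T + x)).
  - intros; apply psiS_der; auto.
  - intros; apply psiS_sign; auto.
  - intros; apply GamS_dec; auto.
Qed.

Lemma supS_nec T t : 0 < T -> 0 <= t -> (forall x, 0 <= x -> psiS T x <= psiS T t) -> KKT1 (GamS T) t.
Proof.
  intros HT. apply br_nec with (P' := psiS' T) (c := fun x => L / (T + x)).
  - intros; apply psiS_der; auto.
  - intros; apply psiS_sign; auto.
Qed.

End Supplier.

Lemma sumR_ext n f g : (forall i, (i < n)%nat -> f i = g i) -> sumR n f = sumR n g.
Proof. induction n; simpl; intros H; auto. rewrite IHn by (intros; apply H; lia). rewrite H by lia. auto. Qed.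

Lemma sumR_plus n f g : sumR n (fun i => f i + g i) = sumR n f + sumR n g.
Proof. induction n; simpl; [ring|]. rewrite IHn. ring. Qed.

Lemma sumR_scal n c f : sumR n (fun i => c * f i) = c * sumR n f.
Proof. induction n; simpl; [ring|]. rewrite IHn. ring. Qed.

Lemma sumR_minus n f g : sumR n (fun i => f i - g i) = sumR n f - sumR n g.
Proof. induction n; simpl; [ring|]. rewrite IHn. ring. Qed.

Lemma sumR_const n c : sumR n (fun _ => c) = INR n * c.
Proof. induction n; simpl sumR; [simpl; ring|]. rewrite IHn, S_INR. ring. Qed.

Lemma sumR_le n f g : (forall i, (i < n)%nat -> f i <= g i) -> sumR n f <= sumR n g.
Proof. induction n; simpl; intros H; [lra|]. assert (f n <= g n) by (apply H; lia).
  assert (sumR n f <= sumR n g) by (apply IHn; intros; apply H; lia). lra. Qed.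

Lemma sumR_nonneg n f : (forall i, (i < n)%nat -> 0 <= f i) -> 0 <= sumR n f.
Proof. intros H. replace 0 with (INR n * 0) by ring. rewrite <- sumR_const. apply sumR_le. auto. Qed.

Lemma sumR_ge_term n f i : (forall j, (j < n)%nat -> 0 <= f j) -> (i < n)%nat -> f i <= sumR n f.
Proof.
  induction n; simpl; intros H Hi; [lia|].
  destruct (Nat.eq_dec i n) as [->|Hne].
  - assert (0 <= sumR n f) by (apply sumR_nonneg; intros; apply H; lia). lra.
  - assert (f i <= sumR n f) by (apply IHn; [intros; apply H; lia|lia]).
    assert (0 <= f n) by (apply H; lia). lra.
Qed.

Lemma sumR_upd n f i x : (i < n)%nat -> sumR n (upd f i x) = sumR n f - f i + x.
Proof.
  induction n; simpl; intros Hi; [lia|].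
  destruct (Nat.eq_dec i n) as [->|Hne].
  - rewrite (sumR_ext n (upd f n x) f).
    + unfold upd. rewrite Nat.eqb_refl. ring.
    + intros j Hj. unfold upd. destruct (Nat.eqb_spec j n); [lia|auto].
  - rewrite IHn by lia. unfold upd. destruct (Nat.eqb_spec n i); [lia|]. ring.
Qed.

Lemma sumR_cont n (F : nat -> R -> R) :
  (forall i, (i < n)%nat -> continuity (F i)) -> continuity (fun l => sumR n (fun i => F i l)).
Proof.
  induction n; simpl; intros H.
  - intros x. apply continuity_pt_const. intros ? ?; auto.
  - intros x. apply (continuity_pt_plus (fun l => sumR n (fun i => F i l)) (F n)).
    + apply IHn. intros; apply H; lia.
    + apply H; lia.
Qed.

Lemma sumR_lower n f c i : (forall j, (j < n)%nat -> c <= f j) -> (i < n)%nat ->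
  f i + (INR n - 1) * c <= sumR n f.
Proof.
  intros H Hi.
  assert (E : sumR n (fun j => f j - c) = sumR n f - INR n * c).
  { rewrite sumR_minus, sumR_const. ring. }
  assert (f i - c <= sumR n (fun j => f j - c)).
  { apply (sumR_ge_term n (fun j => f j - c)); auto. intros j Hj. specialize (H j Hj). lra. }
  lra.
Qed.

Lemma sumR_eq_of_le n f g : (forall i, (i < n)%nat -> f i <= g i) -> sumR n f = sumR n g ->
  forall i, (i < n)%nat -> f i = g i.
Proof.
  intros H E i Hi.
  assert (g i - f i <= sumR n (fun j => g j - f j)).
  { apply (sumR_ge_term n (fun j => g j - f j)); auto. intros j Hj. specialize (H j Hj). lra. }
  rewrite sumR_minus in H0. specialize (H i Hi). lra.
Qed.

Lemma fin_choice {A : Type} (a : A) n (P : nat -> A -> Prop) :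
  (forall i, (i < n)%nat -> exists x, P i x) -> exists F : nat -> A, forall i, (i < n)%nat -> P i (F i).
Proof.
  intros H.
  exists (fun i => match Compare_dec.lt_dec i n with
                   | left Hi => proj1_sig (constructive_indefinite_description _ (H i Hi))
                   | right _ => a end).
  intros i Hi. destruct (Compare_dec.lt_dec i n) as [Hi'|]; [|lia].
  exact (proj2_sig (constructive_indefinite_description _ (H i Hi'))).
Qed.

Lemma inverse_exists (f : R -> R) a b :
  continuity f -> a < b -> (forall x y, a <= x -> x < y -> y <= b -> f y < f x) ->
  exists F : R -> R, continuity F /\
    forall l, a <= F l <= b /\ f (F l) = Rmax (f b) (Rmin (f a) l).
Proof.
  intros Hf Hab Hdec.
  exists (Finv f a b Hf Hab Hdec). split.
  - apply Finv_cont.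
  - intros l. apply Finv_spec.
Qed.

Section KKT.
Variables (M N : nat) (d0 K k0 : R) (g h : nat -> R -> R).
Hypothesis Hg : forall i, (i < M)%nat -> forall x y, d0 <= x -> x < y -> y <= K -> g i y < g i x.
Hypothesis Hh : forall j, (j < N)%nat -> forall x y, 0 <= x -> x < y -> h j x < h j y.
Hypothesis Hcap : INR M * d0 < INR N * k0.

Definition KKTall (p : R) (d s : nat -> R) :=
  0 < p /\ sumR M d = sumR N s /\
  (forall i, (i < M)%nat -> (d0 <= d i <= K /\ g i (d i) <= p /\ (d0 < d i -> g i (d i) = p))) /\
  (forall j, (j < N)%nat -> (0 <= s j <= k0 /\ h j (s j) <= p /\ (s j < k0 -> h j (s j) = p))).

Lemma KKT_cmp p d s p' d' s' : KKTall p d s -> KKTall p' d' s' -> p <= p' ->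
  p = p' /\ (forall i, (i < M)%nat -> d i = d' i) /\ (forall j, (j < N)%nat -> s j = s' j).
Proof.
  intros [Hp [HS [Hd Hs]]] [Hp' [HS' [Hd' Hs']]] Hpp.
  assert (C1 : forall i, (i < M)%nat -> d' i <= d i).
  { intros i Hi. destruct (Rle_dec (d' i) (d i)) as [?|Hn]; auto. exfalso. apply Rnot_le_lt in Hn.
    destruct (Hd i Hi) as [[B1 B2] [G1 G2]]. destruct (Hd' i Hi) as [[B1' B2'] [G1' G2']].
    assert (g i (d' i) = p') by (apply G2'; lra).
    assert (g i (d' i) < g i (d i)) by (apply Hg; auto; lra). lra. }
  assert (C2 : forall j, (j < N)%nat -> s j <= s' j).
  { intros j Hj. destruct (Rle_dec (s j) (s' j)) as [?|Hn]; auto. exfalso. apply Rnot_le_lt in Hn.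
    destruct (Hs j Hj) as [[B1 B2] [G1 G2]]. destruct (Hs' j Hj) as [[B1' B2'] [G1' G2']].
    assert (h j (s' j) = p') by (apply G2'; lra).
    assert (h j (s' j) < h j (s j)) by (apply Hh; auto; lra). lra. }
  assert (S1 := sumR_le M _ _ C1). assert (S2 := sumR_le N _ _ C2).
  assert (E1 : forall i, (i < M)%nat -> d' i = d i) by (apply sumR_eq_of_le; auto; lra).
  assert (E2 : forall j, (j < N)%nat -> s j = s' j) by (apply sumR_eq_of_le; auto; lra).
  split; [|split; [intros i Hi; rewrite E1; auto|auto]].
  destruct (classic (exists j, (j < N)%nat /\ s j < k0)) as [[j [Hj Hsj]]|Hno].
  - destruct (Hs j Hj) as [_ [_ G]]. destruct (Hs' j Hj) as [_ [_ G']].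
    rewrite <- G by auto. rewrite <- G' by (rewrite <- E2; auto). rewrite E2; auto.
  - assert (Hall : forall j, (j < N)%nat -> s j = k0).
    { intros j Hj. destruct (Hs j Hj) as [[B1 B2] _].
      destruct (Req_dec (s j) k0); auto. exfalso. apply Hno. exists j. split; auto. lra. }
    assert (sumR N s = INR N * k0) by (rewrite <- sumR_const; apply sumR_ext; auto).
    destruct (classic (exists i, (i < M)%nat /\ d0 < d i)) as [[i [Hi Hdi]]|Hno2].
    + destruct (Hd i Hi) as [_ [_ G]]. destruct (Hd' i Hi) as [_ [_ G']].
      rewrite <- G by auto. rewrite <- G' by (rewrite E1; auto). rewrite E1; auto.
    + exfalso.
      assert (sumR M d <= sumR M (fun _ => d0)).
      { apply sumR_le. intros i Hi. destruct (Rle_dec (d i) d0); auto. exfalso. apply Hno2.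
        exists i. split; auto. lra. }
      rewrite sumR_const in H0. lra.
Qed.

Lemma KKT_unique p d s p' d' s' : KKTall p d s -> KKTall p' d' s' ->
  p = p' /\ (forall i, (i < M)%nat -> d i = d' i) /\ (forall j, (j < N)%nat -> s j = s' j).
Proof.
  intros H H'. destruct (Rle_dec p p').
  - apply KKT_cmp; auto.
  - assert (Hle : p' <= p) by lra.
    destruct (KKT_cmp p' d' s' p d s H' H Hle) as [A [B C]].
    split; [auto|split; intros; symmetry; auto].
Qed.
End KKT.

Lemma sumR_lin4 n (a b e f : nat -> R) c :
  sumR n (fun i => a i + c * (b i - e i) - f i) = sumR n a + c * (sumR n b - sumR n e) - sumR n f.
Proof. induction n; simpl; [ring|]. rewrite IHn. ring. Qed.

Lemma sumR_lin4' n (a b e f : nat -> R) c :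
  sumR n (fun i => f i - a i - c * (b i - e i)) = sumR n f - sumR n a - c * (sumR n b - sumR n e).
Proof. induction n; simpl; [ring|]. rewrite IHn. ring. Qed.

Theorem theorem2 (M N : nat) (d0 k0 : R) (U C : nat -> R -> R)
  (HM : (1 <= M)%nat) (HN : (1 <= N)%nat)
  (Hd0 : 0 < d0) (Hk0 : 0 < k0)
  (Hcap : INR M * d0 < INR N * k0)
  (HU_conc : forall i, (i < M)%nat -> concave_on (fun x => d0 <= x) (U i))
  (HU_incr : forall i, (i < M)%nat -> strict_incr_on (fun x => d0 <= x) (U i))
  (HU_C1 : forall i, (i < M)%nat -> C1_on_halfline d0 (U i))
  (HU_0 : forall i, (i < M)%nat -> U i d0 = 0)
  (HC_conv : forall i, (i < N)%nat -> convex_on (fun _ => True) (C i))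
  (HC_incr : forall i, (i < N)%nat -> strict_incr_on (fun x => 0 <= x) (C i))
  (HC_C1 : forall i, (i < N)%nat -> C1_on_R (C i))
  (HC_nn : forall i, (i < N)%nat -> forall s, 0 <= s -> 0 <= C i s)
  (HC_0 : forall i, (i < N)%nat -> forall s, s <= 0 -> C i s = 0)
  (Hnopiv : (INR N - 1) * k0 / (INR M * d0) > 1) :
  exists thd ths : nat -> R,
    is_NE M N d0 k0 U C thd ths /\
    (forall thd' ths', is_NE M N d0 k0 U C thd' ths' ->
        (forall i, (i < M)%nat -> thd' i = thd i) /\
        (forall i, (i < N)%nat -> ths' i = ths i)) /\
    is_optimal M N d0 k0 U C (dalloc M N d0 k0 thd ths) (salloc M N d0 k0 thd ths) /\
    (forall d s, is_optimal M N d0 k0 U C d s ->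
        (forall i, (i < M)%nat -> d i = dalloc M N d0 k0 thd ths i) /\
        (forall i, (i < N)%nat -> s i = salloc M N d0 k0 thd ths i)).
Proof.
  assert (HMr : 1 <= INR M) by (apply (le_INR 1); lia).
  assert (HNr : 1 <= INR N) by (apply (le_INR 1); lia).
  assert (HMd : 0 < INR M * d0) by (apply Rmult_lt_0_compat; lra).
  assert (HLpos : INR M * d0 < (INR N - 1) * k0).
  { assert (E : (INR N - 1) * k0 = ((INR N - 1) * k0 / (INR M * d0)) * (INR M * d0)) by (field; lra).
    rewrite E. nra. }
  remember (INR N * k0 - INR M * d0) as D eqn:HDdef.
  remember (INR N * k0 - (INR M - 1) * d0) as K eqn:HKdef.
  remember ((INR N - 1) * k0 - INR M * d0) as L eqn:HLdef.
  assert (HD : 0 < D) by lra.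
  assert (HL : 0 < L) by lra.
  assert (HKD : K = D + d0) by lra.
  assert (HLD : L = D - k0) by lra.
  assert (HdK : d0 < K) by lra.
  destruct (fin_choice (fun _ : R => 0) M (fun i f' =>
      (forall x, d0 < x -> is_derive (U i) x (f' x)) /\
      filterlim (fun h => (U i (d0 + h) - U i d0) / h) (at_right 0) (locally (f' d0)) /\
      (forall x, d0 <= x -> filterlim f' (within (fun y => d0 <= y) (locally x)) (locally (f' x)))))
    as [Up HUp].
  { intros i Hi. apply HU_C1; auto. }
  set (g := fun i => gC (Up i) d0 K).
  set (h := fun j => hS (C j) L).
  assert (g_dec : forall i, (i < M)%nat -> forall x y, d0 <= x -> x < y -> y <= K -> g i y < g i x).
  { intros i Hi. destruct (HUp i Hi) as [A [B _]]. intros. apply (gC_dec (U i) (Up i) d0 K D); auto. }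
  assert (g_cont : forall i, (i < M)%nat -> continuity (g i)).
  { intros i Hi. destruct (HUp i Hi) as [_ [_ Cc]]. apply gC_cont; auto. }
  assert (g_K : forall i, g i K = 0).
  { intros i. apply (gC_K (Up i) d0 K D); auto. }
  assert (g_d0 : forall i, (i < M)%nat -> 0 < g i d0).
  { intros i Hi. destruct (HUp i Hi) as [A [B _]]. apply (gC_d0 (U i) (Up i) d0 K D); auto. }
  assert (h_inc : forall j, (j < N)%nat -> forall x y, 0 <= x -> x < y -> h j x < h j y).
  { intros j Hj x y Hx Hxy. apply hS_inc; auto. }
  assert (h_cont : forall j, (j < N)%nat -> continuity (h j)).
  { intros j Hj. apply hS_cont; auto. }
  assert (h_nonpos : forall j, (j < N)%nat -> forall s, s <= 0 -> h j s = 0).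
  { intros j Hj s Hs. apply hS_nonpos; auto. }
  assert (h_k0 : forall j, (j < N)%nat -> 0 < h j k0).
  { intros j Hj. rewrite <- (h_nonpos j Hj 0) by lra. apply h_inc; auto; lra. }
  destruct (fin_choice (fun _ : R => 0) M (fun i F => continuity F /\
      forall l, d0 <= F l <= K /\ g i (F l) = Rmax (g i K) (Rmin (g i d0) l))) as [Fd HFd].
  { intros i Hi. apply inverse_exists; auto. }
  destruct (fin_choice (fun _ : R => 0) N (fun j F => continuity F /\
      forall l, 0 <= F l <= k0 /\ - h j (F l) = Rmax (- h j k0) (Rmin (- h j 0) l))) as [Fs0 HFs0].
  { intros j Hj. apply (inverse_exists (fun s => - h j s) 0 k0); auto.
    - intros x. apply continuity_pt_opp. apply h_cont; auto.
    - intros x y Hx Hxy Hy. assert (h j x < h j y) by (apply h_inc; auto). lra. }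
  set (Fs := fun j l => Fs0 j (- l)).
  assert (Fd_pos : forall i, (i < M)%nat -> forall l, 0 < l ->
     (d0 <= Fd i l < K /\ g i (Fd i l) <= l /\ (d0 < Fd i l -> g i (Fd i l) = l))).
  { intros i Hi l Hl. destruct (HFd i Hi) as [_ Hs]. destruct (Hs l) as [[B1 B2] E].
    rewrite g_K in E. assert (G0 := g_d0 i Hi).
    assert (E' : g i (Fd i l) = Rmin (g i d0) l).
    { rewrite E. apply Rmax_right. apply Rmin_glb; lra. }
    assert (Rmin (g i d0) l <= l) by apply Rmin_r.
    assert (0 < Rmin (g i d0) l) by (apply Rmin_glb_lt; lra).
    split; [split; auto|split; [lra|]].
    - destruct (Req_dec (Fd i l) K) as [EK|]; [|lra]. rewrite EK, g_K in E'. lra.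
    - intros Hlt. assert (g i (Fd i l) < g i d0) by (apply g_dec; auto; lra).
      rewrite E' in *. unfold Rmin in *. destruct (Rle_dec (g i d0) l); lra. }
  assert (Fs_pos : forall j, (j < N)%nat -> forall l, 0 < l ->
     (0 < Fs j l <= k0 /\ h j (Fs j l) <= l /\ (Fs j l < k0 -> h j (Fs j l) = l))).
  { intros j Hj l Hl. destruct (HFs0 j Hj) as [_ Hs]. destruct (Hs (- l)) as [[B1 B2] E].
    fold (Fs j l) in B1, B2, E.
    rewrite (h_nonpos j Hj 0), Ropp_0 in E by lra. assert (Hk := h_k0 j Hj).
    assert (E' : h j (Fs j l) = Rmin (h j k0) l).
    { unfold Rmin, Rmax in *. destruct (Rle_dec 0 (- l)); [lra|].
      destruct (Rle_dec (- h j k0) (- l)); destruct (Rle_dec (h j k0) l); lra. }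
    assert (Rmin (h j k0) l <= l) by apply Rmin_r.
    assert (0 < Rmin (h j k0) l) by (apply Rmin_glb_lt; lra).
    split; [split; auto|split; [lra|]].
    - destruct (Req_dec (Fs j l) 0) as [E0|]; [|lra]. rewrite E0, (h_nonpos j Hj 0) in E' by lra. lra.
    - intros Hlt. assert (h j (Fs j l) < h j k0) by (apply h_inc; auto; lra).
      rewrite E' in *. unfold Rmin in *. destruct (Rle_dec (h j k0) l); lra. }
  set (Z := fun l => sumR M (fun i => Fd i l) - sumR N (fun j => Fs j l)).
  assert (Zcont : continuity Z).
  { intros x. apply continuity_pt_minus.
    - apply (sumR_cont M Fd). intros i Hi. apply HFd; auto.
    - apply (sumR_cont N Fs). intros j Hj. intros y. unfold Fs.
      apply (continuity_pt_comp Ropp (Fs0 j)).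
      + apply continuity_pt_opp, continuity_pt_id.
      + apply HFs0; auto. }
  assert (Z0 : 0 < Z 0).
  { unfold Z.
    rewrite (sumR_ext M (fun i => Fd i 0) (fun _ => K)).
    2:{ intros i Hi. destruct (HFd i Hi) as [_ Hs]. destruct (Hs 0) as [[B1 B2] E].
        rewrite g_K in E. assert (G0 := g_d0 i Hi).
        rewrite Rmin_right, Rmax_left in E by lra.
        destruct (Req_dec (Fd i 0) K); auto.
        assert (g i K < g i (Fd i 0)) by (apply g_dec; auto; lra). rewrite g_K in H0. lra. }
    rewrite (sumR_ext N (fun j => Fs j 0) (fun _ => 0)).
    2:{ intros j Hj. destruct (HFs0 j Hj) as [_ Hs]. destruct (Hs (-0)) as [[B1 B2] E].
        fold (Fs j 0) in B1, B2, E.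
        rewrite (h_nonpos j Hj 0), Ropp_0 in E by lra. assert (Hk := h_k0 j Hj).
        rewrite Rmin_left, Rmax_right in E by lra.
        destruct (Req_dec (Fs j 0) 0); auto.
        assert (h j 0 < h j (Fs j 0)) by (apply h_inc; auto; lra).
        rewrite (h_nonpos j Hj 0) in H0 by lra. lra. }
    rewrite !sumR_const. nra. }
  set (lhi := 1 + sumR M (fun i => Rabs (g i d0)) + sumR N (fun j => Rabs (h j k0))).
  assert (Hlhi_g : forall i, (i < M)%nat -> g i d0 < lhi).
  { intros i Hi. unfold lhi.
    assert (Rabs (g i d0) <= sumR M (fun i => Rabs (g i d0))) by
      (apply (sumR_ge_term M (fun i => Rabs (g i d0))); auto; intros; apply Rabs_pos).
    assert (0 <= sumR N (fun j => Rabs (h j k0))) by (apply sumR_nonneg; intros; apply Rabs_pos).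
    assert (g i d0 <= Rabs (g i d0)) by apply RRle_abs. lra. }
  assert (Hlhi_h : forall j, (j < N)%nat -> h j k0 < lhi).
  { intros j Hj. unfold lhi.
    assert (Rabs (h j k0) <= sumR N (fun j => Rabs (h j k0))) by
      (apply (sumR_ge_term N (fun j => Rabs (h j k0))); auto; intros; apply Rabs_pos).
    assert (0 <= sumR M (fun i => Rabs (g i d0))) by (apply sumR_nonneg; intros; apply Rabs_pos).
    assert (h j k0 <= Rabs (h j k0)) by apply RRle_abs. lra. }
  assert (Hlhi_pos : 0 < lhi).
  { assert (0 <= sumR N (fun j => Rabs (h j k0))) by (apply sumR_nonneg; intros; apply Rabs_pos).
    assert (0 <= sumR M (fun i => Rabs (g i d0))) by (apply sumR_nonneg; intros; apply Rabs_pos).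
    unfold lhi; lra. }
  assert (Zhi : Z lhi < 0).
  { unfold Z.
    rewrite (sumR_ext M (fun i => Fd i lhi) (fun _ => d0)).
    2:{ intros i Hi. destruct (Fd_pos i Hi lhi Hlhi_pos) as [B [G1 G2]].
        destruct (Req_dec (Fd i lhi) d0); auto.
        assert (g i (Fd i lhi) < g i d0) by (apply g_dec; auto; lra).
        assert (Hg := Hlhi_g i Hi). rewrite G2 in H0 by lra. lra. }
    rewrite (sumR_ext N (fun j => Fs j lhi) (fun _ => k0)).
    2:{ intros j Hj. destruct (Fs_pos j Hj lhi Hlhi_pos) as [B [G1 G2]].
        destruct (Req_dec (Fs j lhi) k0); auto.
        assert (Hh := Hlhi_h j Hj). assert (h j (Fs j lhi) = lhi) by (apply G2; lra).
        assert (h j (Fs j lhi) < h j k0) by (apply h_inc; auto; lra). lra. }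
    rewrite !sumR_const. lra. }
  destruct (IVT_gen Z 0 lhi 0 Zcont) as [lam [Hlam EZ]].
  { rewrite Rmin_right, Rmax_left by lra. lra. }
  rewrite Rmin_left, Rmax_right in Hlam by lra.
  assert (Hlam0 : 0 < lam).
  { destruct (Req_dec lam 0) as [E|]; [|lra]. rewrite E in EZ. lra. }
  set (dS := fun i => Fd i lam).
  set (sS := fun j => Fs j lam).
  assert (HKKT : KKTall M N d0 K k0 g h lam dS sS).
  { split; [auto|split; [|split]].
    - unfold Z in EZ. unfold dS, sS. lra.
    - intros i Hi. destruct (Fd_pos i Hi lam Hlam0) as [[B1 B2] [G1 G2]].
      unfold dS. repeat split; auto; lra.
    - intros j Hj. destruct (Fs_pos j Hj lam Hlam0) as [[B1 B2] [G1 G2]].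
      unfold sS. repeat split; auto; lra. }
  assert (upd_i : forall (f : nat -> R) i x, upd f i x i = x).
  { intros; unfold upd; rewrite Nat.eqb_refl; auto. }
  assert (tot_upd_d : forall thd' ths' i x, (i < M)%nat ->
     total M N (upd thd' i x) ths' = total M N thd' ths' - thd' i + x).
  { intros; unfold total; rewrite sumR_upd; auto; ring. }
  assert (tot_upd_s : forall thd' ths' j x, (j < N)%nat ->
     total M N thd' (upd ths' j x) = total M N thd' ths' - ths' j + x).
  { intros; unfold total; rewrite sumR_upd; auto; ring. }
  assert (payd : forall i thd' ths' T, (i < M)%nat -> 0 < T -> 0 <= thd' i ->
     total M N thd' ths' = T + thd' i ->
     pay_d M N d0 k0 U i thd' ths' = phiC (U i) (Up i) d0 D T (thd' i)).
  { intros i thd' ths' T Hi HT Ht Htot.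
    rewrite (phiC_eq (U i) (Up i) d0 K D) by auto. unfold ddC.
    unfold pay_d, dalloc, price. rewrite <- HDdef, Htot.
    destruct (Req_EM_T (T + thd' i) 0); [lra|].
    replace (thd' i / ((T + thd' i) / D)) with (D * thd' i / (T + thd' i)) by (field; lra).
    reflexivity. }
  assert (pays : forall j thd' ths' S, (j < N)%nat -> 0 < S -> 0 <= ths' j ->
     total M N thd' ths' = S + ths' j ->
     pay_s M N d0 k0 C j thd' ths' = psiS (C j) k0 D S (ths' j)).
  { intros j thd' ths' S Hj HS Ht Htot.
    unfold psiS, ssS, pay_s, salloc, price. rewrite <- HDdef, Htot.
    destruct (Req_EM_T (S + ths' j) 0); [lra|].
    replace (ths' j / ((S + ths' j) / D)) with (D * ths' j / (S + ths' j)) by (field; lra).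
    reflexivity. }
  destruct HKKT as [_ [HsumS [HKd HKs]]].
  set (thd := fun i => (dS i - d0) * lam).
  set (ths := fun j => (k0 - sS j) * lam).
  assert (Htot : total M N thd ths = lam * D).
  { unfold total.
    assert (E1 : sumR M thd = lam * (sumR M dS - INR M * d0)).
    { rewrite <- sumR_const, <- sumR_minus, <- sumR_scal. apply sumR_ext. intros; unfold thd; ring. }
    assert (E2 : sumR N ths = lam * (INR N * k0 - sumR N sS)).
    { rewrite <- sumR_const, <- sumR_minus, <- sumR_scal. apply sumR_ext. intros; unfold ths; ring. }
    rewrite E1, E2, HsumS, HDdef. ring. }
  assert (Hprice : price M N d0 k0 thd ths = lam).
  { unfold price. rewrite Htot, <- HDdef. field. lra. }
  assert (Hdal : forall i, dalloc M N d0 k0 thd ths i = dS i).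
  { intros i. unfold dalloc. destruct (Req_EM_T (total M N thd ths) 0) as [E|_].
    - rewrite Htot in E. nra.
    - rewrite Hprice. unfold thd. field. lra. }
  assert (Hsal : forall j, salloc M N d0 k0 thd ths j = sS j).
  { intros j. unfold salloc. destruct (Req_EM_T (total M N thd ths) 0) as [E|_].
    - rewrite Htot in E. nra.
    - rewrite Hprice. unfold ths. field. lra. }
  assert (HNE : is_NE M N d0 k0 U C thd ths).
  { split; [|split; [|split]].
    - intros i Hi. destruct (HKd i Hi) as [[B1 B2] _]. unfold thd. nra.
    - intros j Hj. destruct (HKs j Hj) as [[B1 B2] _]. unfold ths. nra.
    - intros i Hi x Hx.
      destruct (Fd_pos i Hi lam Hlam0) as [[B1 B2] [G1 G2]]. fold (dS i) in B1, B2, G1, G2.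
      set (T := lam * D - thd i).
      assert (HT : 0 < T) by (unfold T, thd; nra).
      assert (Hti : 0 <= thd i) by (unfold thd; nra).
      rewrite (payd i (upd thd i x) ths T Hi HT) by (rewrite ?upd_i, ?tot_upd_d, ?Htot; auto; unfold T; ring).
      rewrite (payd i thd ths T Hi HT Hti) by (rewrite Htot; unfold T; ring).
      rewrite upd_i.
      destruct (HUp i Hi) as [A1 [A2 _]].
      apply (consC_suff (U i) (Up i) d0 K D); auto.
      assert (Edd : ddC d0 D T (thd i) = dS i) by (unfold ddC, T, thd; field; nra).
      assert (EG : GamC (Up i) d0 K D T (thd i) = g i (dS i) - lam).
      { unfold GamC. rewrite Edd. unfold g, T. f_equal. field. lra. }
      destruct (Rle_lt_or_eq_dec d0 (dS i) B1) as [Hlt|Heq].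
      + left. split; [unfold thd; nra|]. rewrite EG, G2; auto. ring.
      + right. assert (E0 : thd i = 0) by (unfold thd; rewrite <- Heq; ring).
        split; auto. unfold GamC. replace (ddC d0 D T 0) with d0 by (unfold ddC; field; lra).
        replace ((T + 0) / D) with lam by (unfold T; rewrite E0; field; lra).
        rewrite <- Heq in G1. unfold g in G1. lra.
    - intros j Hj x Hx.
      destruct (Fs_pos j Hj lam Hlam0) as [[B1 B2] [G1 G2]]. fold (sS j) in B1, B2, G1, G2.
      set (S := lam * D - ths j).
      assert (HS : 0 < S) by (unfold S, ths; nra).
      assert (Hti : 0 <= ths j) by (unfold ths; nra).
      rewrite (pays j thd (upd ths j x) S Hj HS) by (rewrite ?upd_i, ?tot_upd_s, ?Htot; auto; unfold S; ring).
      rewrite (pays j thd ths S Hj HS Hti) by (rewrite Htot; unfold S; ring).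
      rewrite upd_i.
      apply (supS_suff (C j) k0 D L); auto.
      assert (Ess : ssS k0 D S (ths j) = sS j) by (unfold ssS, S, ths; field; nra).
      assert (EG : GamS (C j) k0 D L S (ths j) = h j (sS j) - lam).
      { unfold GamS. rewrite Ess. unfold h, S. f_equal. field. lra. }
      destruct (Rle_lt_or_eq_dec (sS j) k0 B2) as [Hlt|Heq].
      + left. split; [unfold ths; nra|]. rewrite EG, G2; auto. ring.
      + right. assert (E0 : ths j = 0) by (unfold ths; rewrite Heq; ring).
        split; auto. unfold GamS. replace (ssS k0 D S 0) with k0 by (unfold ssS; field; lra).
        replace ((S + 0) / D) with lam by (unfold S; rewrite E0; field; lra).
        rewrite Heq in G1. unfold h in G1. lra. }
  assert (HKKT : KKTall M N d0 K k0 g h lam dS sS).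
  { split; [auto|split; [auto|split; auto]]. }
  assert (H0M : (0 < M)%nat) by lia.
  assert (UNIQ : forall a b, is_NE M N d0 k0 U C a b ->
     (forall i, (i < M)%nat -> a i = thd i) /\ (forall j, (j < N)%nat -> b j = ths j)).
  { intros a b [Ha [Hb [Hpa Hpb]]].
    assert (Hsa : 0 <= sumR M a) by (apply sumR_nonneg; auto).
    assert (Hsb : 0 <= sumR N b) by (apply sumR_nonneg; auto).
    assert (Hai : forall i, (i < M)%nat -> a i <= total M N a b).
    { intros i Hi. unfold total. assert (a i <= sumR M a) by (apply sumR_ge_term; auto). lra. }
    assert (Hbj : forall j, (j < N)%nat -> b j <= total M N a b).
    { intros j Hj. unfold total. assert (b j <= sumR N b) by (apply sumR_ge_term; auto). lra. }
    assert (Htt : 0 < total M N a b).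
    { destruct (Req_dec (total M N a b) 0) as [E|]; [|unfold total in *; lra]. exfalso.
      assert (a0 : a 0%nat = 0) by (specialize (Hai 0%nat H0M); specialize (Ha 0%nat H0M); lra).
      assert (HU0 : U 0%nat d0 < U 0%nat (d0 + D)) by (apply HU_incr; auto; simpl; lra).
      rewrite HU_0 in HU0 by auto.
      set (x := U 0%nat (d0 + D) / (2 * (d0 / D + 1))).
      assert (Hdd : 0 < d0 / D + 1) by (assert (0 < d0 / D) by (apply Rdiv_lt_0_compat; lra); lra).
      assert (Hx : 0 < x) by (unfold x; apply Rdiv_lt_0_compat; lra).
      specialize (Hpa 0%nat H0M x ltac:(lra)).
      unfold pay_d, dalloc, price in Hpa. rewrite (tot_upd_d a b 0%nat x H0M), E, a0, upd_i in Hpa.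
      replace (0 - 0 + x) with x in Hpa by ring.
      destruct (Req_EM_T x 0); [lra|]. destruct (Req_EM_T 0 0); [|lra].
      rewrite <- HDdef, HU_0 in Hpa by auto.
      replace (x / (x / D)) with D in Hpa by (field; lra).
      assert (x / D * d0 + x = U 0%nat (d0 + D) / 2) by (unfold x; field; lra).
      replace (0 / D) with 0 in Hpa by (field; lra). lra. }
    set (P := total M N a b / D).
    assert (HP : 0 < P) by (unfold P; apply Rdiv_lt_0_compat; lra).
    assert (Hdal' : forall i, dalloc M N d0 k0 a b i = d0 + a i / P).
    { intros i. unfold dalloc, price. destruct (Req_EM_T (total M N a b) 0); [lra|].
      rewrite <- HDdef. reflexivity. }
    assert (Hsal' : forall j, salloc M N d0 k0 a b j = k0 - b j / P).
    { intros j. unfold salloc, price. destruct (Req_EM_T (total M N a b) 0); [lra|].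
      rewrite <- HDdef. reflexivity. }
    assert (KD : forall i, (i < M)%nat ->
      d0 <= dalloc M N d0 k0 a b i <= K /\ g i (dalloc M N d0 k0 a b i) <= P /\
      (d0 < dalloc M N d0 k0 a b i -> g i (dalloc M N d0 k0 a b i) = P)).
    { intros i Hi. set (T := total M N a b - a i).
      assert (HT : 0 < T).
      { destruct (Req_dec T 0) as [E|]; [|specialize (Hai i Hi); unfold T in *; lra]. exfalso.
        assert (Eai : total M N a b = a i) by (unfold T in E; lra).
        specialize (Hpa i Hi (a i / 2) ltac:(specialize (Ha i Hi); lra)).
        unfold pay_d, dalloc, price in Hpa. rewrite (tot_upd_d a b i _ Hi), upd_i, Eai in Hpa.
        replace (a i - a i + a i / 2) with (a i / 2) in Hpa by ring.
        destruct (Req_EM_T (a i / 2) 0); [lra|]. destruct (Req_EM_T (a i) 0); [lra|].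
        rewrite <- HDdef in Hpa.
        replace (a i / 2 / (a i / 2 / D)) with D in Hpa by (field; lra).
        replace (a i / (a i / D)) with D in Hpa by (field; lra).
        assert (0 < a i / D * d0) by (apply Rmult_lt_0_compat; [apply Rdiv_lt_0_compat|]; lra).
        assert (a i / 2 / D * d0 = (a i / D * d0) / 2) by (field; lra). lra. }
      destruct (HUp i Hi) as [A1 [A2 _]].
      assert (Hnec := consC_nec (U i) (Up i) d0 K D Hd0 HD HKD A1 A2 T (a i) HT (Ha i Hi)).
      assert (Edal : dalloc M N d0 k0 a b i = ddC d0 D T (a i)).
      { rewrite Hdal'. unfold ddC, P, T. field. lra. }
      assert (EG : GamC (Up i) d0 K D T (a i) = g i (dalloc M N d0 k0 a b i) - P).
      { unfold GamC. rewrite Edal. unfold g, P, T. f_equal. f_equal. ring. }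
      destruct (ddC_bounds d0 K D HD HKD T (a i) HT (Ha i Hi)) as [B1 B2].
      rewrite <- Edal in B1, B2.
      destruct Hnec as [[Hai0 HG]|[Hai0 HG]].
      - intros x Hx.
        assert (Tx : total M N (upd a i x) b = T + upd a i x i).
        { rewrite tot_upd_d, upd_i; auto; unfold T; ring. }
        assert (Px : 0 <= upd a i x i) by (rewrite upd_i; auto).
        assert (E1 := payd i (upd a i x) b T Hi HT Px Tx).
        rewrite upd_i in E1. rewrite <- E1.
        rewrite <- (payd i a b T); auto; unfold T; ring.
      - rewrite EG in HG. repeat split; try lra.
      - assert (E0 : dalloc M N d0 k0 a b i = d0) by (rewrite Hdal', Hai0; field; lra).
        unfold GamC in HG. replace (ddC d0 D T 0) with d0 in HG by (unfold ddC; field; lra).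
        replace ((T + 0) / D) with P in HG by (unfold P, T; rewrite Hai0; field; lra).
        rewrite E0. unfold g. repeat split; try lra. }
    assert (KS : forall j, (j < N)%nat ->
      0 <= salloc M N d0 k0 a b j <= k0 /\ h j (salloc M N d0 k0 a b j) <= P /\
      (salloc M N d0 k0 a b j < k0 -> h j (salloc M N d0 k0 a b j) = P)).
    { intros j Hj. set (S := total M N a b - b j).
      assert (HS : 0 < S).
      { destruct (Req_dec S 0) as [E|]; [|specialize (Hbj j Hj); unfold S in *; lra]. exfalso.
        assert (Ebj : total M N a b = b j) by (unfold S in E; lra).
        specialize (Hpb j Hj (b j / 2) ltac:(specialize (Hb j Hj); lra)).
        unfold pay_s, salloc, price in Hpb. rewrite (tot_upd_s a b j _ Hj), upd_i, Ebj in Hpb.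
        replace (b j - b j + b j / 2) with (b j / 2) in Hpb by ring.
        destruct (Req_EM_T (b j / 2) 0); [lra|]. destruct (Req_EM_T (b j) 0); [lra|].
        rewrite <- HDdef in Hpb.
        replace (b j / 2 / (b j / 2 / D)) with D in Hpb by (field; lra).
        replace (b j / (b j / D)) with D in Hpb by (field; lra).
        rewrite (HC_0 j Hj (k0 - D)) in Hpb by lra.
        assert (Hk : k0 / D - 1 < 0).
        { assert (k0 / D < 1) by (apply Rmult_lt_reg_r with D; [lra|]; field_simplify; lra). lra. }
        assert (b j / 2 / D * k0 - b j / 2 = (b j / 2) * (k0 / D - 1)) by (field; lra).
        assert (b j / D * k0 - b j = b j * (k0 / D - 1)) by (field; lra).
        assert (0 < b j * (- (k0 / D - 1))) by (apply Rmult_lt_0_compat; lra).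
        lra. }
      assert (Hnec := supS_nec (C j) k0 D L Hk0 HLD HL (HC_C1 j Hj) S (b j) HS (Hb j Hj)).
      assert (Esal : salloc M N d0 k0 a b j = ssS k0 D S (b j)).
      { rewrite Hsal'. unfold ssS, P, S. field. lra. }
      assert (EG : GamS (C j) k0 D L S (b j) = h j (salloc M N d0 k0 a b j) - P).
      { unfold GamS. rewrite Esal. unfold h, P, S. f_equal. f_equal. ring. }
      destruct (ssS_bounds k0 D L Hk0 HLD HL S (b j) HS (Hb j Hj)) as [B1 B2].
      rewrite <- Esal in B1, B2.
      destruct Hnec as [[Hb0 HG]|[Hb0 HG]].
      - intros x Hx.
        assert (Tx : total M N a (upd b j x) = S + upd b j x j).
        { rewrite tot_upd_s, upd_i; auto; unfold S; ring. }
        assert (Px : 0 <= upd b j x j) by (rewrite upd_i; auto).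
        assert (E1 := pays j a (upd b j x) S Hj HS Px Tx).
        rewrite upd_i in E1. rewrite <- E1.
        rewrite <- (pays j a b S); auto; unfold S; ring.
      - rewrite EG in HG.
        assert (Hh : h j (salloc M N d0 k0 a b j) = P) by lra.
        assert (0 < salloc M N d0 k0 a b j).
        { destruct (Rle_dec (salloc M N d0 k0 a b j) 0) as [Hn|]; [|lra].
          rewrite (h_nonpos j Hj _ Hn) in Hh. lra. }
        repeat split; try lra.
      - assert (E0 : salloc M N d0 k0 a b j = k0) by (rewrite Hsal', Hb0; field; lra).
        unfold GamS in HG. replace (ssS k0 D S 0) with k0 in HG by (unfold ssS; field; lra).
        replace ((S + 0) / D) with P in HG by (unfold P, S; rewrite Hb0; field; lra).
        rewrite E0. unfold h. repeat split; try lra. }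
    assert (Hsum' : sumR M (dalloc M N d0 k0 a b) = sumR N (salloc M N d0 k0 a b)).
    { rewrite (sumR_ext M _ (fun i => d0 + / P * a i)) by (intros; rewrite Hdal'; unfold Rdiv; ring).
      rewrite (sumR_ext N _ (fun j => k0 + (- / P) * b j)) by (intros; rewrite Hsal'; unfold Rdiv; ring).
      rewrite !sumR_plus, !sumR_const, !sumR_scal.
      unfold P, total in *. replace (INR N * k0) with (D + INR M * d0) by lra. field. lra. }
    assert (HK2 : KKTall M N d0 K k0 g h P (dalloc M N d0 k0 a b) (salloc M N d0 k0 a b)).
    { split; [auto|split; [auto|split; auto]]. }
    destruct (KKT_unique M N d0 K k0 g h g_dec h_inc Hcap lam dS sS P _ _ HKKT HK2) as [EP [Ed Es]].
    split.
    - intros i Hi. specialize (Ed i Hi). rewrite Hdal' in Ed. unfold thd. rewrite Ed, EP. field. lra.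
    - intros j Hj. specialize (Es j Hj). rewrite Hsal' in Es. unfold ths. rewrite Es, EP. field. lra. }
  exists thd, ths. split; [exact HNE|]. split; [exact UNIQ|].
  replace (dalloc M N d0 k0 thd ths) with dS by (apply functional_extensionality; intros; symmetry; apply Hdal).
  replace (salloc M N d0 k0 thd ths) with sS by (apply functional_extensionality; intros; symmetry; apply Hsal).
  assert (UtEq : forall i x, (i < M)%nat -> d0 <= x -> Utilde M N d0 k0 U i x = UtC (U i) (Up i) d0 K x).
  { intros i x Hi Hx. unfold Utilde. rewrite <- HKdef. apply UtC_eq; auto. }
  assert (CtEq : forall j x, Ctilde M N d0 k0 C j x = CtS (C j) L x).
  { intros. unfold Ctilde, CtS. rewrite <- HLdef. reflexivity. }
  assert (Fb : forall d' s', feasible M N d0 k0 d' s' -> forall i, (i < M)%nat -> d0 <= d' i <= K).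
  { intros d' s' [Hs [Hsb Hdb]] i Hi. split; auto.
    assert (sumR N s' <= sumR N (fun _ => k0)) by (apply sumR_le; intros j Hj; apply Hsb; auto).
    rewrite sumR_const in H.
    assert (d' i + (INR M - 1) * d0 <= sumR M d') by (apply sumR_lower; auto).
    lra. }
  assert (Ud : forall i x, (i < M)%nat -> d0 <= x <= K ->
     0 <= Utilde M N d0 k0 U i (dS i) + lam * (x - dS i) - Utilde M N d0 k0 U i x /\
     (x <> dS i -> 0 < Utilde M N d0 k0 U i (dS i) + lam * (x - dS i) - Utilde M N d0 k0 U i x)).
  { intros i x Hi Hx. destruct (HKd i Hi) as [[B1 B2] [G1 G2]].
    rewrite !UtEq by (auto; lra).
    destruct (HUp i Hi) as [A1 [A2 _]].
    assert (St : x <> dS i -> UtC (U i) (Up i) d0 K x < UtC (U i) (Up i) d0 K (dS i) + lam * (x - dS i)).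
    { intros Hne. apply (UtC_support (U i) (Up i) d0 K D); auto. }
    split; [|intros Hne; specialize (St Hne); lra].
    destruct (Req_dec x (dS i)) as [->|Hne]; [lra|]. specialize (St Hne); lra. }
  assert (Cs : forall j y, (j < N)%nat -> 0 <= y <= k0 ->
     0 <= Ctilde M N d0 k0 C j y - Ctilde M N d0 k0 C j (sS j) - lam * (y - sS j) /\
     (y <> sS j -> 0 < Ctilde M N d0 k0 C j y - Ctilde M N d0 k0 C j (sS j) - lam * (y - sS j))).
  { intros j y Hj Hy. destruct (HKs j Hj) as [[B1 B2] [G1 G2]].
    rewrite !CtEq.
    assert (St : y <> sS j -> CtS (C j) L (sS j) + lam * (y - sS j) < CtS (C j) L y).
    { intros Hne. apply (CtS_support (C j) k0 L); auto. }
    split; [|intros Hne; specialize (St Hne); lra].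
    destruct (Req_dec y (sS j)) as [->|Hne]; [lra|]. specialize (St Hne); lra. }
  assert (Decomp : forall d' s', feasible M N d0 k0 d' s' ->
     objective M N d0 k0 U C dS sS - objective M N d0 k0 U C d' s' =
     sumR M (fun i => Utilde M N d0 k0 U i (dS i) + lam * (d' i - dS i) - Utilde M N d0 k0 U i (d' i)) +
     sumR N (fun j => Ctilde M N d0 k0 C j (s' j) - Ctilde M N d0 k0 C j (sS j) - lam * (s' j - sS j))).
  { intros d' s' [Hs _]. unfold objective.
    rewrite (sumR_lin4 M (fun i => Utilde M N d0 k0 U i (dS i)) d' dS (fun i => Utilde M N d0 k0 U i (d' i)) lam).
    rewrite (sumR_lin4' N (fun j => Ctilde M N d0 k0 C j (sS j)) s' sS (fun j => Ctilde M N d0 k0 C j (s' j)) lam).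
    rewrite Hs, HsumS. ring. }
  assert (Hfeas : feasible M N d0 k0 dS sS).
  { split; [auto|split].
    - intros j Hj. destruct (HKs j Hj) as [B _]. auto.
    - intros i Hi. destruct (HKd i Hi) as [[B1 _] _]. auto. }
  assert (Apos : forall d' s', feasible M N d0 k0 d' s' ->
     0 <= sumR M (fun i => Utilde M N d0 k0 U i (dS i) + lam * (d' i - dS i) - Utilde M N d0 k0 U i (d' i))).
  { intros d' s' Hf. apply sumR_nonneg. intros i Hi. apply Ud; auto. apply (Fb d' s'); auto. }
  assert (Bpos : forall d' s', feasible M N d0 k0 d' s' ->
     0 <= sumR N (fun j => Ctilde M N d0 k0 C j (s' j) - Ctilde M N d0 k0 C j (sS j) - lam * (s' j - sS j))).
  { intros d' s' Hf. apply sumR_nonneg. intros j Hj. apply Cs; auto. destruct Hf as [_ [Hsb _]]. auto. }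
  split.
  - split; [exact Hfeas|]. intros d' s' Hf.
    assert (E := Decomp d' s' Hf). assert (A := Apos d' s' Hf). assert (B := Bpos d' s' Hf). lra.
  - intros d' s' [Hf Hmax].
    assert (E := Decomp d' s' Hf). assert (A := Apos d' s' Hf). assert (B := Bpos d' s' Hf).
    assert (Hm := Hmax dS sS Hfeas).
    split.
    + intros i Hi. destruct (Req_dec (d' i) (dS i)) as [?|Hne]; auto. exfalso.
      assert (Hb := Fb d' s' Hf i Hi).
      destruct (Ud i (d' i) Hi Hb) as [_ Hst]. specialize (Hst Hne).
      assert (T := sumR_ge_term M (fun i => Utilde M N d0 k0 U i (dS i) + lam * (d' i - dS i) - Utilde M N d0 k0 U i (d' i)) i
        ltac:(intros k Hk; apply Ud; auto; apply (Fb d' s'); auto) Hi).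
      simpl in T. lra.
    + intros j Hj. destruct (Req_dec (s' j) (sS j)) as [?|Hne]; auto. exfalso.
      assert (Hb : 0 <= s' j <= k0) by (destruct Hf as [_ [Hsb _]]; auto).
      destruct (Cs j (s' j) Hj Hb) as [_ Hst]. specialize (Hst Hne).
      assert (T := sumR_ge_term N (fun j => Ctilde M N d0 k0 C j (s' j) - Ctilde M N d0 k0 C j (sS j) - lam * (s' j - sS j)) j
        ltac:(intros k Hk; apply Cs; auto; destruct Hf as [_ [Hsb _]]; auto) Hj).
      simpl in T. lra.
Qed.
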